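(* Let $(A,\circ,[\cdot,\cdot])$ be a finite-dimensional dual pre-Poisson algebra and $r\in A\otimes A$. Define linear maps $\delta_{\circ,r},\delta_{[\cdot,\cdot],r}:A\to A\otimes A$ by $$\delta_{\circ,r}(x)=\big(R_{\blacksquare}(x)\otimes\mathrm{id}+\mathrm{id}\otimes R_{\circ}(x)\big)r,\qquad \delta_{[\cdot,\cdot],r}(x)=\big(L_{\square}(x)\otimes\mathrm{id}-\mathrm{id}\otimes R_{[\cdot,\cdot]}(x)\big)r .$$ If $r$ is a symmetric solution of the permutative-Leibniz Yang–Baxter equation (PLYBE) in $(A,\circ,[\cdot,\cdot])$, then $(A,\circ,[\cdot,\cdot],\delta_{\circ,r},\delta_{[\cdot,\cdot],r})$ is a dual pre-Poisson bialgebra.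
   Context: Field $\mathbb{F}$ of characteristic $0$. A dual pre-Poisson algebra $(A,\circ,[\cdot,\cdot])$: $x\circ(y\circ z)=(x\circ y)\circ z=(y\circ x)\circ z$; $[x,[y,z]]=[[x,y],z]+[y,[x,z]]$; $[x,y\circ z]=[x,y]\circ z+y\circ[x,z]$; $[x\circ y,z]=x\circ[y,z]+y\circ[x,z]$; $[x,y]\circ z=-[y,x]\circ z$. For a bilinear operation $\diamond$ write $L_\diamond(x)y=x\diamond y$, $R_\diamond(x)y=y\diamond x$. Put $x\blacksquare y=x\circ y-y\circ x$ and $x\square y=[x,y]+[y,x]$. $\tau$ is the flip $u\otimes v\mapsto v\otimes u$; $r$ symmetric means $\tau(r)=r$. PLYBE: writing $r=\sum_i a_i\otimes b_i$, set $r_{13}\circ r_{23}=\sum_{i,j}a_i\otimes a_j\otimes b_i\circ b_j$, $r_{12}\circ r_{23}=\sum_{i,j}a_i\otimes b_i\circ a_j\otimes b_j$, $r_{13}\blacksquare r_{12}=\sum_{i,j}a_i\blacksquare a_j\otimes b_j\otimes b_i$, $[r_{13},r_{23}]=\sum_{i,j}a_i\otimes a_j\otimes[b_i,b_j]$, $[r_{12},r_{23}]=\sum_{i,j}a_i\otimes[b_i,a_j]\otimes b_j$, $r_{12}\square r_{13}=\sum_{i,j}a_i\square a_j\otimes b_i\otimes b_j$, and $\mathbf{P}(r)=r_{13}\circ r_{23}-r_{12}\circ r_{23}+r_{13}\blacksquare r_{12}$, $\mathbf{L}(r)=[r_{13},r_{23}]+[r_{12},r_{23}]-r_{12}\square r_{13}$.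 $r$ is a solution of the PLYBE if $\mathbf{P}(r)=\mathbf{L}(r)=0$. A dual pre-Poisson bialgebra is $(A,\circ,[\cdot,\cdot],\delta_\circ,\delta_{[\cdot,\cdot]})$ where $(A,\circ,[\cdot,\cdot])$ is a dual pre-Poisson algebra and $\delta_\circ,\delta_{[\cdot,\cdot]}:A\to A\otimes A$ are linear maps satisfying: (coalgebra) $(\mathrm{id}\otimes\delta_\circ)\delta_\circ=(\delta_\circ\otimes\mathrm{id})\delta_\circ=(\tau\otimes\mathrm{id})(\delta_\circ\otimes\mathrm{id})\delta_\circ$; $(\mathrm{id}\otimes\delta_{[\cdot,\cdot]})\delta_{[\cdot,\cdot]}=(\delta_{[\cdot,\cdot]}\otimes\mathrm{id})\delta_{[\cdot,\cdot]}+(\tau\otimes\mathrm{id})(\mathrm{id}\otimes\delta_{[\cdot,\cdot]})\delta_{[\cdot,\cdot]}$; $(\mathrm{id}\otimes\delta_\circ)\delta_{[\cdot,\cdot]}=(\delta_{[\cdot,\cdot]}\otimes\mathrm{id})\delta_\circ+(\tau\otimes\mathrm{id})(\mathrm{id}\otimes\delta_{[\cdot,\cdot]})\delta_\circ$; $(\delta_\circ\otimes\mathrm{id})\delta_{[\cdot,\cdot]}=(\mathrm{id}\otimes\delta_{[\cdot,\cdot]})\delta_\circ+(\tau\otimes\mathrm{id})(\mathrm{id}\otimes\delta_{[\cdot,\cdot]})\delta_\circ$; $(\delta_{[\cdot,\cdot]}\otimes\mathrm{id})\delta_\circ=-(\tau\otimes\mathrm{id})(\delta_{[\cdot,\cdot]}\otimes\mathrm{id})\delta_\circ$;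 and, with $\delta_\blacksquare=\delta_\circ-\tau\delta_\circ$, $\delta_\square=\delta_{[\cdot,\cdot]}+\tau\delta_{[\cdot,\cdot]}$, for all $x,y\in A$: (1) $\delta_\circ(x\circ y)=(L_\blacksquare(x)\otimes\mathrm{id})\delta_\circ(y)+(\mathrm{id}\otimes R_\circ(y))\delta_\circ(x)$; (2) $(\mathrm{id}\otimes R_\circ(x))\tau\delta_\circ(y)=(R_\circ(y)\otimes\mathrm{id})\delta_\circ(x)$; (3) $\delta_\circ(x\circ y)=(L_\blacksquare(y)\otimes\mathrm{id})\delta_\blacksquare(x)+(\mathrm{id}\otimes L_\circ(x))\delta_\circ(y)$; (4) $(\mathrm{id}\otimes R_{[\cdot,\cdot]}(x))\tau\delta_{[\cdot,\cdot]}(y)=(R_{[\cdot,\cdot]}(y)\otimes\mathrm{id})\delta_{[\cdot,\cdot]}(x)$; (5) $\delta_{[\cdot,\cdot]}([x,y])=(\mathrm{id}\otimes R_{[\cdot,\cdot]}(y)-L_\square(y)\otimes\mathrm{id})\delta_\square(x)+(\mathrm{id}\otimes L_{[\cdot,\cdot]}(x)+L_{[\cdot,\cdot]}(x)\otimes\mathrm{id})\delta_{[\cdot,\cdot]}(y)$; (6) $\delta_\circ([x,y])=(\mathrm{id}\otimes L_{[\cdot,\cdot]}(x)+L_{[\cdot,\cdot]}(x)\otimes\mathrm{id})\delta_\circ(y)+(L_\blacksquare(y)\otimes\mathrm{id}-\mathrm{id}\otimes R_\circ(y))\delta_\square(x)$; (7) $\delta_{[\cdot,\cdot]}(x\circ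 y)=(\mathrm{id}\otimes L_\circ(x))\delta_{[\cdot,\cdot]}(y)+(\mathrm{id}\otimes R_\circ(y))\delta_{[\cdot,\cdot]}(x)-(L_\square(x)\otimes\mathrm{id})\delta_\circ(y)-(L_\square(y)\otimes\mathrm{id})\delta_\blacksquare(x)$; (8) $(\mathrm{id}\otimes R_{[\cdot,\cdot]}(x))\tau\delta_\circ(y)=-(R_\circ(y)\otimes\mathrm{id})\delta_{[\cdot,\cdot]}(x)$; (9) $\delta_\circ([x,y])=(\mathrm{id}\otimes L_\circ(x)-L_\circ(x)\otimes\mathrm{id})\delta_{[\cdot,\cdot]}(y)+(\mathrm{id}\otimes R_{[\cdot,\cdot]}(y)-L_\square(y)\otimes\mathrm{id})\delta_\blacksquare(x)$; (10) $\delta_\square(x\circ y)=(\mathrm{id}\otimes L_\circ(x))\delta_\square(y)+(\mathrm{id}\otimes L_\circ(y))\delta_\square(x)-(L_{[\cdot,\cdot]}(x)\otimes\mathrm{id})\delta_\blacksquare(y)-(L_{[\cdot,\cdot]}(y)\otimes\mathrm{id})\delta_\blacksquare(x)$; (11) $\delta_{[\cdot,\cdot]}(x\circ y)=(L_\circ(x)\otimes\mathrm{id})\delta_{[\cdot,\cdot]}(y)-(\mathrm{id}\otimes R_{[\cdot,\cdot]}(y))\delta_\blacksquare(x)+(\mathrm{id}\otimes L_{[\cdot,\cdot]}(x))\delta_\circ(y)-(R_\blacksquare(y)\otimes\mathrm{id})\delta_\square(x)$; (12) $\delta_\circ(x\square y)=(\mathrm{id}\otimes L_\square(x))\delta_\circ(y)+(L_\square(x)\otimes\mathrm{id})\tau\delta_\circ(y)-(\mathrm{id}\otimes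 R_\blacksquare(y))\delta_{[\cdot,\cdot]}(x)-(R_\blacksquare(y)\otimes\mathrm{id})\tau\delta_{[\cdot,\cdot]}(x)$. *)

(* Defs.v *)
(* A finite-dimensional algebra over a field F is modelled
   as the coordinate space V := 'rV[F]_n with the standard basis e_i.
   Tensors: A (x) A  ~  'M[F]_n  (entry (i,j) = coefficient of e_i (x) e_j),
            A (x) A (x) A ~ {ffun 'I_n * 'I_n * 'I_n -> F}. *)
From HB Require Import structures.
From mathcomp Require Import all_boot all_order all_algebra.
Set Implicit Arguments. Unset Strict Implicit. Unset Printing Implicit Defensive.
Import Order.TTheory GRing.Theory Num.Theory.
Local Open Scope ring_scope.

Section DPP.
Variables (F : fieldType) (n : nat).
Local Notation V := 'rV[F]_n.
Local Notation T2 := 'M[F]_n.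
Local Notation T3 := {ffun 'I_n * 'I_n * 'I_n -> F}.

Definition ebase (i : 'I_n) : V := delta_mx 0 i.

Definition scale3 (c : F) (f : T3) : T3 := [ffun k => c * f k].

Definition tens2 (u v : V) : T2 := \matrix_(i, j) (u 0 i * v 0 j).
Definition tens3 (u v w : V) : T3 :=
  [ffun ijk : 'I_n * 'I_n * 'I_n => u 0 ijk.1.1 * v 0 ijk.1.2 * w 0 ijk.2].
Definition tensl (u : V) (t : T2) : T3 :=
  [ffun ijk : 'I_n * 'I_n * 'I_n => u 0 ijk.1.1 * t ijk.1.2 ijk.2].
Definition tensr (t : T2) (u : V) : T3 :=
  [ffun ijk : 'I_n * 'I_n * 'I_n => t ijk.1.1 ijk.1.2 * u 0 ijk.2].

Definition tmap (f g : V -> V) (t : T2) : T2 :=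
  \sum_(i < n) \sum_(j < n) t i j *: tens2 (f (ebase i)) (g (ebase j)).
Definition flip (t : T2) : T2 := t^T.
Definition id_tens (d : V -> T2) (t : T2) : T3 :=
  \sum_(i < n) \sum_(j < n) scale3 (t i j) (tensl (ebase i) (d (ebase j))).
Definition tens_id (d : V -> T2) (t : T2) : T3 :=
  \sum_(i < n) \sum_(j < n) scale3 (t i j) (tensr (d (ebase i)) (ebase j)).
Definition flip12 (t : T3) : T3 :=
  [ffun ijk : 'I_n * 'I_n * 'I_n => t ((ijk.1.2, ijk.1.1), ijk.2)].

Definition Lop (op : V -> V -> V) (x : V) : V -> V := fun y => op x y.
Definition Rop (op : V -> V -> V) (x : V) : V -> V := fun y => op y x.
(* x ■ y = x o y - y o x ,  x □ y = [x,y] + [y,x] *)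
Definition bsq (mul : V -> V -> V) (x y : V) : V := mul x y - mul y x.
Definition wsq (br : V -> V -> V) (x y : V) : V := br x y + br y x.

Definition bilinear_op (op : V -> V -> V) : Prop :=
  (forall (a : F) (x y z : V), op (a *: x + y) z = a *: op x z + op y z) /\
  (forall (a : F) (x y z : V), op z (a *: x + y) = a *: op z x + op z y).

Definition dual_pre_poisson (mul br : V -> V -> V) : Prop :=
  bilinear_op mul /\ bilinear_op br /\
  [/\ (forall x y z, mul x (mul y z) = mul (mul x y) z /\
                   mul (mul x y) z = mul (mul y x) z),
    (forall x y z, br x (br y z) = br (br x y) z + br y (br x z)),
    (forall x y z, br x (mul y z) = mul (br x y) z + mul y (br x z)),
    (forall x y z, br (mul x y) z = mul x (br y z) + mul y (br x z)) &
    (forall x y z, mul (br x y) z = - mul (br y x) z)].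

Definition PLYBE_P (mul : V -> V -> V) (r : T2) : T3 :=
  \sum_(p < n) \sum_(q < n) \sum_(s < n) \sum_(t < n) scale3 (r p q * r s t)
    (tens3 (ebase p) (ebase s) (mul (ebase q) (ebase t))
     - tens3 (ebase p) (mul (ebase q) (ebase s)) (ebase t)
     + tens3 (bsq mul (ebase p) (ebase s)) (ebase t) (ebase q)).
Definition PLYBE_L (br : V -> V -> V) (r : T2) : T3 :=
  \sum_(p < n) \sum_(q < n) \sum_(s < n) \sum_(t < n) scale3 (r p q * r s t)
    (tens3 (ebase p) (ebase s) (br (ebase q) (ebase t))
     + tens3 (ebase p) (br (ebase q) (ebase s)) (ebase t)
     - tens3 (wsq br (ebase p) (ebase s)) (ebase q) (ebase t)).
Definition PLYBE_solution (mul br : V -> V -> V) (r : T2) : Prop :=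
  PLYBE_P mul r = 0 /\ PLYBE_L br r = 0.

Definition dpp_bialgebra (mul br : V -> V -> V) (dc db : V -> T2) : Prop :=
  let dbs := fun x => dc x - flip (dc x) in
  let dws := fun x => db x + flip (db x) in
  let idV := fun v : V => v in
  dual_pre_poisson mul br /\
    (forall (a : F) x y, dc (a *: x + y) = a *: dc x + dc y) /\
    (forall (a : F) x y, db (a *: x + y) = a *: db x + db y) /\
    [/\ (forall x, id_tens dc (dc x) = tens_id dc (dc x) /\
                   tens_id dc (dc x) = flip12 (tens_id dc (dc x))),
        (forall x, id_tens db (db x) = tens_id db (db x) + flip12 (id_tens db (db x))),
        (forall x, id_tens dc (db x) = tens_id db (dc x) + flip12 (id_tens db (dc x))),
        (forall x, tens_id dc (db x) = id_tens db (dc x) + flip12 (id_tens db (dc x))) &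
        (forall x, tens_id db (dc x) = - flip12 (tens_id db (dc x)))] /\
    ((forall x y, dc (mul x y) =
           tmap (Lop (bsq mul) x) idV (dc y) + tmap idV (Rop mul y) (dc x)))
    /\ ((forall x y, tmap idV (Rop mul x) (flip (dc y)) = tmap (Rop mul y) idV (dc x)))
    /\ ((forall x y, dc (mul x y) =
           tmap (Lop (bsq mul) y) idV (dbs x) + tmap idV (Lop mul x) (dc y)))
    /\ ((forall x y, tmap idV (Rop br x) (flip (db y)) = tmap (Rop br y) idV (db x)))
    /\ ((forall x y, db (br x y) =
           tmap idV (Rop br y) (dws x) - tmap (Lop (wsq br) y) idV (dws x)
           + (tmap idV (Lop br x) (db y) + tmap (Lop br x) idV (db y))))
    /\ ((forall x y, dc (br x y) =
           tmap idV (Lop br x) (dc y) + tmap (Lop br x) idV (dc y)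
           + (tmap (Lop (bsq mul) y) idV (dws x) - tmap idV (Rop mul y) (dws x))))
    /\ ((forall x y, db (mul x y) =
           tmap idV (Lop mul x) (db y) + tmap idV (Rop mul y) (db x)
           - tmap (Lop (wsq br) x) idV (dc y) - tmap (Lop (wsq br) y) idV (dbs x)))
    /\ ((forall x y, tmap idV (Rop br x) (flip (dc y)) = - tmap (Rop mul y) idV (db x)))
    /\ ((forall x y, dc (br x y) =
           tmap idV (Lop mul x) (db y) - tmap (Lop mul x) idV (db y)
           + (tmap idV (Rop br y) (dbs x) - tmap (Lop (wsq br) y) idV (dbs x))))
    /\ ((forall x y, dws (mul x y) =
           tmap idV (Lop mul x) (dws y) + tmap idV (Lop mul y) (dws x)
           - tmap (Lop br x) idV (dbs y) - tmap (Lop br y) idV (dbs x)))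
    /\ ((forall x y, db (mul x y) =
           tmap (Lop mul x) idV (db y) - tmap idV (Rop br y) (dbs x)
           + tmap idV (Lop br x) (dc y) - tmap (Rop (bsq mul) y) idV (dws x))) /\
    ((forall x y, dc (wsq br x y) =
           tmap idV (Lop (wsq br) x) (dc y) + tmap (Lop (wsq br) x) idV (flip (dc y))
           - tmap idV (Rop (bsq mul) y) (db x)
           - tmap (Rop (bsq mul) y) idV (flip (db x)))).

Definition delta_circ_r (mul : V -> V -> V) (r : T2) (x : V) : T2 :=
  tmap (Rop (bsq mul) x) (fun v => v) r + tmap (fun v => v) (Rop mul x) r.
Definition delta_br_r (br : V -> V -> V) (r : T2) (x : V) : T2 :=
  tmap (Lop (wsq br) x) (fun v => v) r - tmap (fun v => v) (Rop br x) r.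

End DPP.

(* Main.v *)
From Pilot Require Import Defs.
From HB Require Import structures.
From mathcomp Require Import all_boot all_order all_algebra.
From mathcomp Require Import ring.
Import GRing.Theory.
Local Open Scope ring_scope.

Module PilotAux.
Set Implicit Arguments. Unset Strict Implicit. Unset Printing Implicit Defensive.
Section Infra.
Variables (F : fieldType) (n : nat).
Local Notation V := 'rV[F]_n.
Local Notation T2 := 'M[F]_n.
Local Notation T3 := {ffun 'I_n * 'I_n * 'I_n -> F}.

Definition lin (W1 W2 : lmodType F) (f : W1 -> W2) :=
  forall (c : F) (u v : W1), f (c *: u + v) = c *: f u + f v.
Definition lin3 (W1 : lmodType F) (f : W1 -> T3) :=
  forall (c : F) (u v : W1), f (c *: u + v) = scale3 c (f u) + f v.
Definition lin33 (f : T3 -> T3) :=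
  forall (c : F) (u v : T3), f (scale3 c u + v) = scale3 c (f u) + f v.

Lemma scale3E c (f : T3) k : scale3 c f k = c * f k.
Proof. by rewrite /scale3 ffunE. Qed.

Lemma scale3_sumr c I (P : pred I) (s : seq I) (g : I -> T3) :
  scale3 c (\sum_(i <- s | P i) g i) = \sum_(i <- s | P i) scale3 c (g i).
Proof.
apply/ffunP => k; rewrite /scale3 !ffunE !sum_ffunE mulr_sumr.
by apply: eq_bigr => i _; rewrite !ffunE.
Qed.
Lemma scale3A a b (f : T3) : scale3 a (scale3 b f) = scale3 (a * b) f.
Proof. by apply/ffunP => k; rewrite /scale3 !ffunE mulrA. Qed.
Lemma scale3D c (f g : T3) : scale3 c (f + g) = scale3 c f + scale3 c g.
Proof. by apply/ffunP => k; rewrite /scale3 !ffunE mulrDr. Qed.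
Lemma scale3Dl a b (f : T3) : scale3 (a + b) f = scale3 a f + scale3 b f.
Proof. by apply/ffunP => k; rewrite /scale3 !ffunE mulrDl. Qed.
Lemma scale31 (f : T3) : scale3 1 f = f.
Proof. by apply/ffunP => k; rewrite /scale3 !ffunE mul1r. Qed.
Lemma scale30 (f : T3) : scale3 0 f = 0.
Proof. by apply/ffunP => k; rewrite /scale3 !ffunE mul0r. Qed.
Lemma scale3r0 c : scale3 c (0 : T3) = 0.
Proof. by apply/ffunP => k; rewrite /scale3 !ffunE mulr0. Qed.

Section LinFacts.
Variables (W1 W2 : lmodType F) (f : W1 -> W2) (hf : lin f).
Lemma lin0 : f 0 = 0.
Proof.
have := hf 1 0 0; rewrite !scale1r addr0 => h.
by apply: (addrI (f 0)); rewrite addr0 -h.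
Qed.
Lemma linD u v : f (u + v) = f u + f v.
Proof. by rewrite -[u]scale1r hf !scale1r. Qed.
Lemma linZ c u : f (c *: u) = c *: f u.
Proof. by rewrite -[c *: u]addr0 hf lin0 addr0. Qed.
Lemma linN u : f (- u) = - f u.
Proof. by rewrite -scaleN1r linZ scaleN1r. Qed.
Lemma linB u v : f (u - v) = f u - f v.
Proof. by rewrite linD linN. Qed.
Lemma lin_sum I (s : seq I) (P : pred I) (g : I -> W1) :
  f (\sum_(i <- s | P i) g i) = \sum_(i <- s | P i) f (g i).
Proof. exact: (big_morph f linD lin0). Qed.
End LinFacts.

Section Lin3Facts.
Variables (W1 : lmodType F) (f : W1 -> T3) (hf : lin3 f).
Lemma lin30 : f 0 = 0.
Proof.
have := hf 1 0 0; rewrite !scale1r addr0 scale31 => h.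
by apply: (addrI (f 0)); rewrite addr0 -h.
Qed.
Lemma lin3D u v : f (u + v) = f u + f v.
Proof. by rewrite -[u]scale1r hf scale31 scale1r. Qed.
Lemma lin3Z c u : f (c *: u) = scale3 c (f u).
Proof. by rewrite -[c *: u]addr0 hf lin30 addr0. Qed.
Lemma lin3_sum I (s : seq I) (P : pred I) (g : I -> W1) :
  f (\sum_(i <- s | P i) g i) = \sum_(i <- s | P i) f (g i).
Proof. exact: (big_morph f lin3D lin30). Qed.
End Lin3Facts.

Section Lin33Facts.
Variables (f : T3 -> T3) (hf : lin33 f).
Lemma lin330 : f 0 = 0.
Proof.
have := hf 1 0 0; rewrite !scale31 addr0 => h.
by apply: (addrI (f 0)); rewrite addr0 -h.
Qed.
Lemma lin33D u v : f (u + v) = f u + f v.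
Proof. by rewrite -[u]scale31 hf !scale31. Qed.
Lemma lin33Z c u : f (scale3 c u) = scale3 c (f u).
Proof. by rewrite -[scale3 c u]addr0 hf lin330 addr0. Qed.
Lemma lin33N u : f (- u) = - f u.
Proof.
have -> : - u = scale3 (-1) u by apply/ffunP => k; rewrite /scale3 !ffunE mulN1r.
by rewrite lin33Z; apply/ffunP => k; rewrite /scale3 !ffunE mulN1r.
Qed.
Lemma lin33B u v : f (u - v) = f u - f v.
Proof. by rewrite lin33D lin33N. Qed.
Lemma lin33_sum I (s : seq I) (P : pred I) (g : I -> T3) :
  f (\sum_(i <- s | P i) g i) = \sum_(i <- s | P i) f (g i).
Proof. exact: (big_morph f lin33D lin330). Qed.
End Lin33Facts.

End Infra.
Section Main.
Variables (F : fieldType) (n : nat).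
Local Notation V := 'rV[F]_n.
Local Notation T2 := 'M[F]_n.
Local Notation T3 := {ffun 'I_n * 'I_n * 'I_n -> F}.
Variables (mul br : V -> V -> V) (r : T2).
Hypothesis HmL : forall (a : F) (x y z : V), mul (a *: x + y) z = a *: mul x z + mul y z.
Hypothesis HmR : forall (a : F) (x y z : V), mul z (a *: x + y) = a *: mul z x + mul z y.
Hypothesis HbL : forall (a : F) (x y z : V), br (a *: x + y) z = a *: br x z + br y z.
Hypothesis HbR : forall (a : F) (x y z : V), br z (a *: x + y) = a *: br z x + br z y.
Hypothesis Hr : flip r = r.
Lemma bm : bilinear_op mul. Proof. by split. Qed.
Lemma bb : bilinear_op br. Proof. by split. Qed.
Hypothesis H2 : (2%:R : F) != 0.

Lemma rsym i j : r j i = r i j.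
Proof. by rewrite -[in RHS]Hr /flip mxE. Qed.

Section Bil.
Variable op : V -> V -> V.
Hypothesis hb : bilinear_op op.
Lemma linLop x : lin (Lop op x). Proof. by move=> c u v; rewrite /Lop hb.2. Qed.
Lemma linRop x : lin (Rop op x). Proof. by move=> c u v; rewrite /Rop hb.1. Qed.
Lemma opDl x y z : op (x + y) z = op x z + op y z.
Proof. exact: (linD (linRop z)). Qed.
Lemma opDr x y z : op z (x + y) = op z x + op z y.
Proof. exact: (linD (linLop z)). Qed.
Lemma opNl x z : op (- x) z = - op x z.
Proof. exact: (linN (linRop z)). Qed.
Lemma opNr x z : op z (- x) = - op z x.
Proof. exact: (linN (linLop z)). Qed.
Lemma opBl x y z : op (x - y) z = op x z - op y z.
Proof. exact: (linB (linRop z)). Qed.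
Lemma opBr x y z : op z (x - y) = op z x - op z y.
Proof. exact: (linB (linLop z)). Qed.
Lemma opZl c x z : op (c *: x) z = c *: op x z.
Proof. exact: (linZ (linRop z)). Qed.
Lemma opZr c x z : op z (c *: x) = c *: op z x.
Proof. exact: (linZ (linLop z)). Qed.
End Bil.

Lemma bsqL (a : F) (x y z : V) : bsq mul (a *: x + y) z = a *: bsq mul x z + bsq mul y z.
Proof.
rewrite /bsq HmL (opDr bm) (opZr bm) scalerBr.
by rewrite addrACA opprD.
Qed.
Lemma bsqR (a : F) (x y z : V) : bsq mul z (a *: x + y) = a *: bsq mul z x + bsq mul z y.
Proof.
rewrite /bsq HmR (opDl bm) (opZl bm) scalerBr.
by rewrite addrACA opprD.
Qed.
Lemma wsqL (a : F) (x y z : V) : wsq br (a *: x + y) z = a *: wsq br x z + wsq br y z.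
Proof.
rewrite /wsq HbL (opDr bb) (opZr bb) scalerDr.
by rewrite addrACA.
Qed.
Lemma wsqR (a : F) (x y z : V) : wsq br z (a *: x + y) = a *: wsq br z x + wsq br z y.
Proof.
rewrite /wsq HbR (opDl bb) (opZl bb) scalerDr.
by rewrite addrACA.
Qed.
Lemma linId : lin (fun v : V => v). Proof. by []. Qed.

Definition S2 (Phi : V -> V -> T2) : T2 :=
  \sum_(i < n) \sum_(j < n) r i j *: Phi (ebase F i) (ebase F j).
Definition S23 (Phi : V -> V -> T3) : T3 :=
  \sum_(i < n) \sum_(j < n) scale3 (r i j) (Phi (ebase F i) (ebase F j)).
Definition S4 (Psi : V -> V -> V -> V -> T3) : T3 :=
  \sum_(p < n) \sum_(q < n) \sum_(s < n) \sum_(t < n)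
     scale3 (r p q * r s t) (Psi (ebase F p) (ebase F q) (ebase F s) (ebase F t)).

Lemma eq_S2 Phi Psi : (forall u v, Phi u v = Psi u v) -> S2 Phi = S2 Psi.
Proof. by move=> h; rewrite /S2 /S23; apply: eq_bigr => i _; apply: eq_bigr => j _; rewrite h. Qed.
Lemma eq_S23 Phi Psi : (forall u v, Phi u v = Psi u v) -> S23 Phi = S23 Psi.
Proof. by move=> h; rewrite /S2 /S23; apply: eq_bigr => i _; apply: eq_bigr => j _; rewrite h. Qed.
Lemma eq_S4 Phi Psi : (forall p q s t, Phi p q s t = Psi p q s t) -> S4 Phi = S4 Psi.
Proof.
move=> h; rewrite /S4; apply: eq_bigr => i _; apply: eq_bigr => j _; apply: eq_bigr => k _.
by apply: eq_bigr => l _; rewrite h.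
Qed.

Lemma tmapS2 (f g : V -> V) : tmap f g r = S2 (fun u v => tens2 (f u) (g v)).
Proof. by []. Qed.

Lemma S2D Phi Psi : S2 Phi + S2 Psi = S2 (fun u v => Phi u v + Psi u v).
Proof.
rewrite /S2 -big_split; apply: eq_bigr => i _; rewrite -big_split.
by apply: eq_bigr => j _; rewrite scalerDr.
Qed.
Lemma S2N Phi : - S2 Phi = S2 (fun u v => - Phi u v).
Proof.
rewrite /S2 -sumrN; apply: eq_bigr => i _; rewrite -sumrN.
by apply: eq_bigr => j _; rewrite scalerN.
Qed.
Lemma S2B Phi Psi : S2 Phi - S2 Psi = S2 (fun u v => Phi u v - Psi u v).
Proof. by rewrite S2N S2D. Qed.

Lemma S23D Phi Psi : S23 Phi + S23 Psi = S23 (fun u v => Phi u v + Psi u v).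
Proof.
rewrite /S23 -big_split; apply: eq_bigr => i _; rewrite -big_split.
by apply: eq_bigr => j _; rewrite scale3D.
Qed.

Lemma lin_S2 (M : T2 -> T2) Phi : lin M -> M (S2 Phi) = S2 (fun u v => M (Phi u v)).
Proof.
move=> hM; rewrite /S2 (lin_sum hM); apply: eq_bigr => i _.
by rewrite (lin_sum hM); apply: eq_bigr => j _; rewrite (linZ hM).
Qed.
Lemma lin3_S2 (M : T2 -> T3) Phi : lin3 M -> M (S2 Phi) = S23 (fun u v => M (Phi u v)).
Proof.
move=> hM; rewrite /S2 (lin3_sum hM); apply: eq_bigr => i _.
by rewrite (lin3_sum hM); apply: eq_bigr => j _; rewrite (lin3Z hM).
Qed.

Lemma twice2 (x y : T2) : x + x = y + y -> x = y.
Proof.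
move=> h; apply/matrixP => i j; have := congr1 (fun m : T2 => m i j) h.
rewrite !mxE => e; apply: (mulfI H2); by rewrite !mulr_natl !mulr2n.
Qed.
Lemma twice3 (x y : T3) : x + x = y + y -> x = y.
Proof.
move=> h; apply/ffunP => i; have := congr1 (fun m : T3 => m i) h.
rewrite !ffunE => e; apply: (mulfI H2); by rewrite !mulr_natl !mulr2n.
Qed.

Lemma S2_swap Phi : S2 Phi = S2 (fun u v => Phi v u).
Proof.
rewrite /S2 exchange_big /=; apply: eq_bigr => i _; apply: eq_bigr => j _.
by rewrite rsym.
Qed.
Lemma S2_sym Phi Psi : (forall u v, Phi u v + Phi v u = Psi u v + Psi v u) -> S2 Phi = S2 Psi.
Proof.
move=> h; apply: twice2; rewrite {2}S2_swap [X in _ = _ + X]S2_swap !S2D.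
exact: eq_S2.
Qed.

Lemma lin_expand (W : lmodType F) (f : V -> W) (a : V) : lin f -> f a = \sum_(i < n) a 0 i *: f (ebase F i).
Proof.
move=> hf; rewrite {1}(row_sum_delta a) (lin_sum hf).
by apply: eq_bigr => i _; rewrite (linZ hf).
Qed.
Lemma tmap_tens2 (f g : V -> V) (a b : V) : lin f -> lin g -> tmap f g (tens2 a b) = tens2 (f a) (g b).
Proof.
move=> hf hg; rewrite (lin_expand a hf) (lin_expand b hg).
apply/matrixP => k l; rewrite /tmap /tens2 !mxE summxE.
rewrite !summxE big_distrlr /=; apply: eq_bigr => i _.
rewrite summxE; apply: eq_bigr => j _.
by rewrite /tens2 !mxE; ring.
Qed.
Lemma lin_tmap (f g : V -> V) : lin (tmap f g).
Proof.
move=> c u v; rewrite /tmap scaler_sumr -big_split; apply: eq_bigr => i _.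
rewrite scaler_sumr -big_split; apply: eq_bigr => j _.
by rewrite !mxE scalerDl scalerA.
Qed.
Lemma lin_flip : lin (@flip F n).
Proof. by move=> c u v; apply/matrixP => i j; rewrite /flip !mxE. Qed.
Lemma flip_tens2 (a b : V) : flip (tens2 a b) = tens2 b a.
Proof. by apply/matrixP => i j; rewrite /flip !mxE mulrC. Qed.


Lemma bbsq : bilinear_op (bsq mul). Proof. by split=> *; [rewrite bsqL | rewrite bsqR]. Qed.
Lemma bwsq : bilinear_op (wsq br). Proof. by split=> *; [rewrite wsqL | rewrite wsqR]. Qed.

Hypothesis A1 : forall x y z, mul x (mul y z) = mul (mul x y) z.
Hypothesis A2 : forall x y z, mul (mul x y) z = mul (mul y x) z.
Hypothesis A3 : forall x y z, br x (br y z) = br (br x y) z + br y (br x z).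
Hypothesis A4 : forall x y z, br x (mul y z) = mul (br x y) z + mul y (br x z).
Hypothesis A5 : forall x y z, br (mul x y) z = mul x (br y z) + mul y (br x z).
Hypothesis A6 : forall x y z, mul (br x y) z = - mul (br y x) z.

Definition D1 x y z := mul x (mul y z) - mul (mul x y) z.
Definition D2 x y z := mul (mul x y) z - mul (mul y x) z.
Definition D3 x y z := br x (br y z) - (br (br x y) z + br y (br x z)).
Definition D4 x y z := br x (mul y z) - (mul (br x y) z + mul y (br x z)).
Definition D5 x y z := br (mul x y) z - (mul x (br y z) + mul y (br x z)).
Definition D6 x y z := mul (br x y) z + mul (br y x) z.
Lemma D1E x y z : D1 x y z = 0. Proof. by rewrite /D1 A1 subrr. Qed.
Lemma D2E x y z : D2 x y z = 0. Proof. by rewrite /D2 A2 subrr. Qed.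
Lemma D3E x y z : D3 x y z = 0. Proof. by rewrite /D3 A3 subrr. Qed.
Lemma D4E x y z : D4 x y z = 0. Proof. by rewrite /D4 A4 subrr. Qed.
Lemma D5E x y z : D5 x y z = 0. Proof. by rewrite /D5 A5 subrr. Qed.
Lemma D6E x y z : D6 x y z = 0. Proof. by rewrite /D6 A6 addNr. Qed.

Lemma pv0 a b c : (br (br c b) a) = - (br b (br c a)) + (br c (br b a)).
Proof.
apply/eqP; rewrite -subr_eq0; apply/eqP.
rewrite (_ : _ - _ = (-1%:R) *: (D3 c b a)); last first.
  by apply/rowP => k; rewrite /D1 /D2 /D3 /D4 /D5 /D6 !mxE; ring.
by rewrite ?D1E ?D2E ?D3E ?D4E ?D5E ?D6E !scaler0 ?addr0.
Qed.
Lemma pv1 a b c : (br (br c a) b) = - (br a (br c b)) + (br c (br a b)).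
Proof.
apply/eqP; rewrite -subr_eq0; apply/eqP.
rewrite (_ : _ - _ = (-1%:R) *: (D3 c a b)); last first.
  by apply/rowP => k; rewrite /D1 /D2 /D3 /D4 /D5 /D6 !mxE; ring.
by rewrite ?D1E ?D2E ?D3E ?D4E ?D5E ?D6E !scaler0 ?addr0.
Qed.
Lemma pv2 a b c : (br (br b c) a) = (br b (br c a)) - (br c (br b a)).
Proof.
apply/eqP; rewrite -subr_eq0; apply/eqP.
rewrite (_ : _ - _ = (-1%:R) *: (D3 b c a)); last first.
  by apply/rowP => k; rewrite /D1 /D2 /D3 /D4 /D5 /D6 !mxE; ring.
by rewrite ?D1E ?D2E ?D3E ?D4E ?D5E ?D6E !scaler0 ?addr0.
Qed.
Lemma pv3 a b c : (br (br b a) c) = - (br a (br b c)) + (br b (br a c)).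
Proof.
apply/eqP; rewrite -subr_eq0; apply/eqP.
rewrite (_ : _ - _ = (-1%:R) *: (D3 b a c)); last first.
  by apply/rowP => k; rewrite /D1 /D2 /D3 /D4 /D5 /D6 !mxE; ring.
by rewrite ?D1E ?D2E ?D3E ?D4E ?D5E ?D6E !scaler0 ?addr0.
Qed.
Lemma pv4 a b c : (br (br a c) b) = (br a (br c b)) - (br c (br a b)).
Proof.
apply/eqP; rewrite -subr_eq0; apply/eqP.
rewrite (_ : _ - _ = (-1%:R) *: (D3 a c b)); last first.
  by apply/rowP => k; rewrite /D1 /D2 /D3 /D4 /D5 /D6 !mxE; ring.
by rewrite ?D1E ?D2E ?D3E ?D4E ?D5E ?D6E !scaler0 ?addr0.
Qed.
Lemma pv5 a b c : (br (br a b) c) = (br a (br b c)) - (br b (br a c)).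
Proof.
apply/eqP; rewrite -subr_eq0; apply/eqP.
rewrite (_ : _ - _ = (-1%:R) *: (D3 a b c)); last first.
  by apply/rowP => k; rewrite /D1 /D2 /D3 /D4 /D5 /D6 !mxE; ring.
by rewrite ?D1E ?D2E ?D3E ?D4E ?D5E ?D6E !scaler0 ?addr0.
Qed.
Lemma pv6 a b c : (mul (br c b) a) = (br (mul b c) a) - (br b (mul c a)) - (mul b (br c a)).
Proof.
apply/eqP; rewrite -subr_eq0; apply/eqP.
rewrite (_ : _ - _ = (1%:R) *: (D4 b c a) + (-1%:R) *: (D5 b c a) + (1%:R) *: (D6 b c a)); last first.
  by apply/rowP => k; rewrite /D1 /D2 /D3 /D4 /D5 /D6 !mxE; ring.
by rewrite ?D1E ?D2E ?D3E ?D4E ?D5E ?D6E !scaler0 ?addr0.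
Qed.
Lemma pv7 a b c : (mul (br c a) b) = (br (mul a c) b) - (br a (mul c b)) - (mul a (br c b)).
Proof.
apply/eqP; rewrite -subr_eq0; apply/eqP.
rewrite (_ : _ - _ = (1%:R) *: (D4 a c b) + (-1%:R) *: (D5 a c b) + (1%:R) *: (D6 a c b)); last first.
  by apply/rowP => k; rewrite /D1 /D2 /D3 /D4 /D5 /D6 !mxE; ring.
by rewrite ?D1E ?D2E ?D3E ?D4E ?D5E ?D6E !scaler0 ?addr0.
Qed.
Lemma pv8 a b c : (mul (br b c) a) = - (br (mul b c) a) + (br b (mul c a)) + (mul b (br c a)).
Proof.
apply/eqP; rewrite -subr_eq0; apply/eqP.
rewrite (_ : _ - _ = (-1%:R) *: (D4 b c a) + (1%:R) *: (D5 b c a)); last first.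
  by apply/rowP => k; rewrite /D1 /D2 /D3 /D4 /D5 /D6 !mxE; ring.
by rewrite ?D1E ?D2E ?D3E ?D4E ?D5E ?D6E !scaler0 ?addr0.
Qed.
Lemma pv9 a b c : (mul (br b a) c) = (br (mul a b) c) - (br a (mul b c)) - (mul a (br b c)).
Proof.
apply/eqP; rewrite -subr_eq0; apply/eqP.
rewrite (_ : _ - _ = (1%:R) *: (D4 a b c) + (-1%:R) *: (D5 a b c) + (1%:R) *: (D6 a b c)); last first.
  by apply/rowP => k; rewrite /D1 /D2 /D3 /D4 /D5 /D6 !mxE; ring.
by rewrite ?D1E ?D2E ?D3E ?D4E ?D5E ?D6E !scaler0 ?addr0.
Qed.
Lemma pv10 a b c : (mul (br a c) b) = - (br (mul a c) b) + (br a (mul c b)) + (mul a (br c b)).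
Proof.
apply/eqP; rewrite -subr_eq0; apply/eqP.
rewrite (_ : _ - _ = (-1%:R) *: (D4 a c b) + (1%:R) *: (D5 a c b)); last first.
  by apply/rowP => k; rewrite /D1 /D2 /D3 /D4 /D5 /D6 !mxE; ring.
by rewrite ?D1E ?D2E ?D3E ?D4E ?D5E ?D6E !scaler0 ?addr0.
Qed.
Lemma pv11 a b c : (mul (br a b) c) = - (br (mul a b) c) + (br a (mul b c)) + (mul a (br b c)).
Proof.
apply/eqP; rewrite -subr_eq0; apply/eqP.
rewrite (_ : _ - _ = (-1%:R) *: (D4 a b c) + (1%:R) *: (D5 a b c)); last first.
  by apply/rowP => k; rewrite /D1 /D2 /D3 /D4 /D5 /D6 !mxE; ring.
by rewrite ?D1E ?D2E ?D3E ?D4E ?D5E ?D6E !scaler0 ?addr0.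
Qed.
Lemma pv12 a b c : (mul c (br b a)) = (br (mul b c) a) - (mul b (br c a)).
Proof.
apply/eqP; rewrite -subr_eq0; apply/eqP.
rewrite (_ : _ - _ = (-1%:R) *: (D5 b c a)); last first.
  by apply/rowP => k; rewrite /D1 /D2 /D3 /D4 /D5 /D6 !mxE; ring.
by rewrite ?D1E ?D2E ?D3E ?D4E ?D5E ?D6E !scaler0 ?addr0.
Qed.
Lemma pv13 a b c : (mul c (br a b)) = (br (mul a c) b) - (mul a (br c b)).
Proof.
apply/eqP; rewrite -subr_eq0; apply/eqP.
rewrite (_ : _ - _ = (-1%:R) *: (D5 a c b)); last first.
  by apply/rowP => k; rewrite /D1 /D2 /D3 /D4 /D5 /D6 !mxE; ring.
by rewrite ?D1E ?D2E ?D3E ?D4E ?D5E ?D6E !scaler0 ?addr0.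
Qed.
Lemma pv14 a b c : (mul b (br a c)) = (br (mul a b) c) - (mul a (br b c)).
Proof.
apply/eqP; rewrite -subr_eq0; apply/eqP.
rewrite (_ : _ - _ = (-1%:R) *: (D5 a b c)); last first.
  by apply/rowP => k; rewrite /D1 /D2 /D3 /D4 /D5 /D6 !mxE; ring.
by rewrite ?D1E ?D2E ?D3E ?D4E ?D5E ?D6E !scaler0 ?addr0.
Qed.
Lemma pv15 a b c : (br c (mul b a)) = (br (mul b c) a) - (br b (mul c a)).
Proof.
apply/eqP; rewrite -subr_eq0; apply/eqP.
rewrite (_ : _ - _ = (1%:R) *: (D4 b c a) + (-1%:R) *: (D5 b c a) + (1%:R) *: (D6 b c a) + (1%:R) *: (D4 c b a)); last first.
  by apply/rowP => k; rewrite /D1 /D2 /D3 /D4 /D5 /D6 !mxE; ring.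
by rewrite ?D1E ?D2E ?D3E ?D4E ?D5E ?D6E !scaler0 ?addr0.
Qed.
Lemma pv16 a b c : (br c (mul a b)) = (br (mul a c) b) - (br a (mul c b)).
Proof.
apply/eqP; rewrite -subr_eq0; apply/eqP.
rewrite (_ : _ - _ = (1%:R) *: (D4 a c b) + (-1%:R) *: (D5 a c b) + (1%:R) *: (D6 a c b) + (1%:R) *: (D4 c a b)); last first.
  by apply/rowP => k; rewrite /D1 /D2 /D3 /D4 /D5 /D6 !mxE; ring.
by rewrite ?D1E ?D2E ?D3E ?D4E ?D5E ?D6E !scaler0 ?addr0.
Qed.
Lemma pv17 a b c : (br b (mul a c)) = (br (mul a b) c) - (br a (mul b c)).
Proof.
apply/eqP; rewrite -subr_eq0; apply/eqP.
rewrite (_ : _ - _ = (1%:R) *: (D4 a b c) + (-1%:R) *: (D5 a b c) + (1%:R) *: (D6 a b c) + (1%:R) *: (D4 b a c)); last first.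
  by apply/rowP => k; rewrite /D1 /D2 /D3 /D4 /D5 /D6 !mxE; ring.
by rewrite ?D1E ?D2E ?D3E ?D4E ?D5E ?D6E !scaler0 ?addr0.
Qed.
Lemma pv18 a b c : (br (mul c b) a) = (br (mul b c) a).
Proof.
apply/eqP; rewrite -subr_eq0; apply/eqP.
rewrite (_ : _ - _ = (-1%:R) *: (D5 b c a) + (1%:R) *: (D5 c b a)); last first.
  by apply/rowP => k; rewrite /D1 /D2 /D3 /D4 /D5 /D6 !mxE; ring.
by rewrite ?D1E ?D2E ?D3E ?D4E ?D5E ?D6E !scaler0 ?addr0.
Qed.
Lemma pv19 a b c : (br (mul c a) b) = (br (mul a c) b).
Proof.
apply/eqP; rewrite -subr_eq0; apply/eqP.
rewrite (_ : _ - _ = (-1%:R) *: (D5 a c b) + (1%:R) *: (D5 c a b)); last first.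
  by apply/rowP => k; rewrite /D1 /D2 /D3 /D4 /D5 /D6 !mxE; ring.
by rewrite ?D1E ?D2E ?D3E ?D4E ?D5E ?D6E !scaler0 ?addr0.
Qed.
Lemma pv20 a b c : (br (mul b a) c) = (br (mul a b) c).
Proof.
apply/eqP; rewrite -subr_eq0; apply/eqP.
rewrite (_ : _ - _ = (-1%:R) *: (D5 a b c) + (1%:R) *: (D5 b a c)); last first.
  by apply/rowP => k; rewrite /D1 /D2 /D3 /D4 /D5 /D6 !mxE; ring.
by rewrite ?D1E ?D2E ?D3E ?D4E ?D5E ?D6E !scaler0 ?addr0.
Qed.
Lemma pv21 a b c : (mul c (mul b a)) = (mul (mul b c) a).
Proof.
apply/eqP; rewrite -subr_eq0; apply/eqP.
rewrite (_ : _ - _ = (-1%:R) *: (D2 b c a) + (1%:R) *: (D1 c b a)); last first.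
  by apply/rowP => k; rewrite /D1 /D2 /D3 /D4 /D5 /D6 !mxE; ring.
by rewrite ?D1E ?D2E ?D3E ?D4E ?D5E ?D6E !scaler0 ?addr0.
Qed.
Lemma pv22 a b c : (mul c (mul a b)) = (mul (mul a c) b).
Proof.
apply/eqP; rewrite -subr_eq0; apply/eqP.
rewrite (_ : _ - _ = (-1%:R) *: (D2 a c b) + (1%:R) *: (D1 c a b)); last first.
  by apply/rowP => k; rewrite /D1 /D2 /D3 /D4 /D5 /D6 !mxE; ring.
by rewrite ?D1E ?D2E ?D3E ?D4E ?D5E ?D6E !scaler0 ?addr0.
Qed.
Lemma pv23 a b c : (mul b (mul c a)) = (mul (mul b c) a).
Proof.
apply/eqP; rewrite -subr_eq0; apply/eqP.
rewrite (_ : _ - _ = (1%:R) *: (D1 b c a)); last first.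
  by apply/rowP => k; rewrite /D1 /D2 /D3 /D4 /D5 /D6 !mxE; ring.
by rewrite ?D1E ?D2E ?D3E ?D4E ?D5E ?D6E !scaler0 ?addr0.
Qed.
Lemma pv24 a b c : (mul b (mul a c)) = (mul (mul a b) c).
Proof.
apply/eqP; rewrite -subr_eq0; apply/eqP.
rewrite (_ : _ - _ = (-1%:R) *: (D2 a b c) + (1%:R) *: (D1 b a c)); last first.
  by apply/rowP => k; rewrite /D1 /D2 /D3 /D4 /D5 /D6 !mxE; ring.
by rewrite ?D1E ?D2E ?D3E ?D4E ?D5E ?D6E !scaler0 ?addr0.
Qed.
Lemma pv25 a b c : (mul a (mul c b)) = (mul (mul a c) b).
Proof.
apply/eqP; rewrite -subr_eq0; apply/eqP.
rewrite (_ : _ - _ = (1%:R) *: (D1 a c b)); last first.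
  by apply/rowP => k; rewrite /D1 /D2 /D3 /D4 /D5 /D6 !mxE; ring.
by rewrite ?D1E ?D2E ?D3E ?D4E ?D5E ?D6E !scaler0 ?addr0.
Qed.
Lemma pv26 a b c : (mul a (mul b c)) = (mul (mul a b) c).
Proof.
apply/eqP; rewrite -subr_eq0; apply/eqP.
rewrite (_ : _ - _ = (1%:R) *: (D1 a b c)); last first.
  by apply/rowP => k; rewrite /D1 /D2 /D3 /D4 /D5 /D6 !mxE; ring.
by rewrite ?D1E ?D2E ?D3E ?D4E ?D5E ?D6E !scaler0 ?addr0.
Qed.
Lemma pv27 a b c : (mul (mul c b) a) = (mul (mul b c) a).
Proof.
apply/eqP; rewrite -subr_eq0; apply/eqP.
rewrite (_ : _ - _ = (-1%:R) *: (D2 b c a)); last first.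
  by apply/rowP => k; rewrite /D1 /D2 /D3 /D4 /D5 /D6 !mxE; ring.
by rewrite ?D1E ?D2E ?D3E ?D4E ?D5E ?D6E !scaler0 ?addr0.
Qed.
Lemma pv28 a b c : (mul (mul c a) b) = (mul (mul a c) b).
Proof.
apply/eqP; rewrite -subr_eq0; apply/eqP.
rewrite (_ : _ - _ = (-1%:R) *: (D2 a c b)); last first.
  by apply/rowP => k; rewrite /D1 /D2 /D3 /D4 /D5 /D6 !mxE; ring.
by rewrite ?D1E ?D2E ?D3E ?D4E ?D5E ?D6E !scaler0 ?addr0.
Qed.
Lemma pv29 a b c : (mul (mul b a) c) = (mul (mul a b) c).
Proof.
apply/eqP; rewrite -subr_eq0; apply/eqP.
rewrite (_ : _ - _ = (-1%:R) *: (D2 a b c)); last first.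
  by apply/rowP => k; rewrite /D1 /D2 /D3 /D4 /D5 /D6 !mxE; ring.
by rewrite ?D1E ?D2E ?D3E ?D4E ?D5E ?D6E !scaler0 ?addr0.
Qed.


Ltac solve_lin := first [ exact: linId | exact: (linLop bm _) | exact: (linRop bm _)
  | exact: (linLop bb _) | exact: (linRop bb _) | exact: (linLop bbsq _)
  | exact: (linRop bbsq _) | exact: (linLop bwsq _) | exact: (linRop bwsq _) ].
Ltac push2 := repeat first [ rewrite (linD (lin_tmap _ _)) | rewrite (linN (lin_tmap _ _))
  | rewrite (linD lin_flip) | rewrite (linN lin_flip) | rewrite flip_tens2
  | (rewrite tmap_tens2; [| solve_lin | solve_lin]) ].
Ltac distr := unfold Lop, Rop, bsq, wsq;
  repeat first [ rewrite (opDl bm) | rewrite (opDr bm) | rewrite (opNl bm) | rewrite (opNr bm)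
               | rewrite (opDl bb) | rewrite (opDr bb) | rewrite (opNl bb) | rewrite (opNr bb) ].
Ltac to_S2 := rewrite /delta_circ_r /delta_br_r !tmapS2 ?S2D ?S2B;
  repeat first [ rewrite (lin_S2 _ (lin_tmap _ _)) | rewrite (lin_S2 _ lin_flip)
               | rewrite S2D | rewrite S2B | rewrite S2N ].
Ltac fin2 := apply/matrixP => i j; rewrite /tens2 !mxE; ring.

Local Notation dc := (delta_circ_r mul r).
Local Notation db := (delta_br_r br r).
Local Notation idV := (fun v : V => v).
Local Notation dbs := (fun x => dc x - flip (dc x)).
Local Notation dws := (fun x => db x + flip (db x)).

Lemma linDC : lin dc.
Proof.
move=> c u v; rewrite /delta_circ_r !tmapS2 !S2D.
rewrite /S2 scaler_sumr -big_split; apply: eq_bigr => i _.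
rewrite scaler_sumr -big_split; apply: eq_bigr => j _.
apply/matrixP => k l; rewrite /tens2 /Rop /bsq !mxE.
rewrite ?(opDr bm) ?(opDl bm) ?(opZl bm) ?(opZr bm) !mxE; ring.
Qed.
Lemma linDB : lin db.
Proof.
move=> c u v; rewrite /delta_br_r !tmapS2 !S2B.
rewrite /S2 scaler_sumr -big_split; apply: eq_bigr => i _.
rewrite scaler_sumr -big_split; apply: eq_bigr => j _.
apply/matrixP => k l; rewrite /tens2 /Rop /Lop /wsq !mxE.
rewrite ?(opDr bb) ?(opDl bb) ?(opZl bb) ?(opZr bb) !mxE; ring.
Qed.

Definition Thc (w : V) := fun s t => tens2 (bsq mul s w) t + tens2 s (mul t w).
Definition Thb (w : V) := fun s t => tens2 (wsq br w s) t - tens2 s (br t w).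
Lemma dcS2 w : dc w = S2 (Thc w).
Proof. by rewrite /delta_circ_r !tmapS2 S2D. Qed.
Lemma dbS2 w : db w = S2 (Thb w).
Proof. by rewrite /delta_br_r !tmapS2 S2B. Qed.

Lemma lin3_id_tens (d : V -> T2) : lin3 (id_tens d).
Proof.
move=> c u v; rewrite /id_tens scale3_sumr -big_split; apply: eq_bigr => i _.
rewrite scale3_sumr -big_split; apply: eq_bigr => j _.
by rewrite scale3A mxE scale3Dl mxE.
Qed.
Lemma lin3_tens_id (d : V -> T2) : lin3 (tens_id d).
Proof.
move=> c u v; rewrite /tens_id scale3_sumr -big_split; apply: eq_bigr => i _.
rewrite scale3_sumr -big_split; apply: eq_bigr => j _.
by rewrite scale3A mxE scale3Dl mxE.
Qed.
Lemma lin3_tensl (a : V) : lin3 (tensl a).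
Proof. by move=> c u v; apply/ffunP => k; rewrite /scale3 !ffunE !mxE; ring. Qed.
Lemma lin3_tensr (a : V) : lin3 (fun t => tensr t a).
Proof. by move=> c u v; apply/ffunP => k; rewrite /scale3 !ffunE !mxE; ring. Qed.
Lemma lin33_flip12 : lin33 (@flip12 F n).
Proof. by move=> c u v; apply/ffunP => k; rewrite /scale3 !ffunE. Qed.

Section Lin3More.
Variables (W1 : lmodType F) (f : W1 -> T3) (hf : lin3 f).
Lemma lin3N u : f (- u) = - f u.
Proof.
rewrite -scaleN1r (lin3Z hf); apply/ffunP => k; rewrite /scale3 !ffunE mulN1r //.
Qed.
Lemma lin3B u v : f (u - v) = f u - f v.
Proof. by rewrite (lin3D hf) lin3N. Qed.
End Lin3More.

Lemma tensl_S2 (a : V) Phi : tensl a (S2 Phi) = S23 (fun s t => tensl a (Phi s t)).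
Proof. exact: (lin3_S2 _ (lin3_tensl a)). Qed.
Lemma tensr_S2 (a : V) Phi : tensr (S2 Phi) a = S23 (fun s t => tensr (Phi s t) a).
Proof. exact: (lin3_S2 Phi (lin3_tensr a)). Qed.

Lemma S23_S23 Psi : S23 (fun p q => S23 (fun s t => Psi p q s t)) = S4 Psi.
Proof.
rewrite /S23 /S4; apply: eq_bigr => p _; apply: eq_bigr => q _.
rewrite scale3_sumr; apply: eq_bigr => s _.
rewrite scale3_sumr; apply: eq_bigr => t _.
by rewrite scale3A.
Qed.

Lemma id_tens_tens2 (d : V -> T2) a b : lin d -> id_tens d (tens2 a b) = tensl a (d b).
Proof.
move=> hd; rewrite [in RHS](row_sum_delta a) [in RHS](lin_expand b hd).
apply/ffunP => k; rewrite /id_tens /tensl !sum_ffunE !ffunE !summxE big_distrl /=.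
apply: eq_bigr => i _; rewrite !sum_ffunE big_distrr /=.
apply: eq_bigr => j _; rewrite /scale3 /tens2 !ffunE !mxE; ring.
Qed.
Lemma tens_id_tens2 (d : V -> T2) a b : lin d -> tens_id d (tens2 a b) = tensr (d a) b.
Proof.
move=> hd; rewrite [in RHS](row_sum_delta b) [in RHS](lin_expand a hd).
apply/ffunP => k; rewrite /tens_id /tensr !sum_ffunE !ffunE !summxE big_distrl /=.
apply: eq_bigr => i _; rewrite !sum_ffunE big_distrr /=.
apply: eq_bigr => j _; rewrite /scale3 /tens2 !ffunE !mxE; ring.
Qed.

Lemma id_tens_S2 (d : V -> T2) (Th : V -> V -> V -> T2) (A B : V -> V -> V) :
  lin d -> (forall w, d w = S2 (Th w)) ->
  id_tens d (S2 (fun u v => tens2 (A u v) (B u v))) =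
  S4 (fun p q s t => tensl (A p q) (Th (B p q) s t)).
Proof.
move=> hd hT; rewrite (lin3_S2 _ (lin3_id_tens d)) -S23_S23; apply: eq_S23 => p q.
by rewrite id_tens_tens2 // hT tensl_S2.
Qed.
Lemma tens_id_S2 (d : V -> T2) (Th : V -> V -> V -> T2) (A B : V -> V -> V) :
  lin d -> (forall w, d w = S2 (Th w)) ->
  tens_id d (S2 (fun u v => tens2 (A u v) (B u v))) =
  S4 (fun p q s t => tensr (Th (A p q) s t) (B p q)).
Proof.
move=> hd hT; rewrite (lin3_S2 _ (lin3_tens_id d)) -S23_S23; apply: eq_S23 => p q.
by rewrite tens_id_tens2 // hT tensr_S2.
Qed.

Lemma S4D Phi Psi : S4 Phi + S4 Psi = S4 (fun p q s t => Phi p q s t + Psi p q s t).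
Proof.
rewrite /S4 -big_split; apply: eq_bigr => p _; rewrite -big_split.
apply: eq_bigr => q _; rewrite -big_split; apply: eq_bigr => s _; rewrite -big_split.
by apply: eq_bigr => t _; rewrite scale3D.
Qed.
Lemma S4N Phi : - S4 Phi = S4 (fun p q s t => - Phi p q s t).
Proof.
rewrite /S4 -sumrN; apply: eq_bigr => p _; rewrite -sumrN.
apply: eq_bigr => q _; rewrite -sumrN; apply: eq_bigr => s _; rewrite -sumrN.
by apply: eq_bigr => t _; apply/ffunP => k; rewrite /scale3 !ffunE mulrN.
Qed.
Lemma S4B Phi Psi : S4 Phi - S4 Psi = S4 (fun p q s t => Phi p q s t - Psi p q s t).
Proof. by rewrite S4N S4D. Qed.
Lemma S4Z c Phi : scale3 c (S4 Phi) = S4 (fun p q s t => scale3 c (Phi p q s t)).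
Proof.
rewrite /S4 scale3_sumr; apply: eq_bigr => p _; rewrite scale3_sumr.
apply: eq_bigr => q _; rewrite scale3_sumr; apply: eq_bigr => s _; rewrite scale3_sumr.
by apply: eq_bigr => t _; rewrite !scale3A mulrC.
Qed.
Lemma lin33_S4 (M : T3 -> T3) Psi : lin33 M -> M (S4 Psi) = S4 (fun p q s t => M (Psi p q s t)).
Proof.
move=> hM; rewrite /S4 (lin33_sum hM); apply: eq_bigr => p _.
rewrite (lin33_sum hM); apply: eq_bigr => q _.
rewrite (lin33_sum hM); apply: eq_bigr => s _.
by rewrite (lin33_sum hM); apply: eq_bigr => t _; rewrite (lin33Z hM).
Qed.

Lemma S4_swap_pq Psi : S4 Psi = S4 (fun p q s t => Psi q p s t).
Proof.
rewrite /S4 exchange_big /=; apply: eq_bigr => p _; apply: eq_bigr => q _.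
by rewrite rsym.
Qed.
Lemma S4_swap_st Psi : S4 Psi = S4 (fun p q s t => Psi p q t s).
Proof.
rewrite /S4; apply: eq_bigr => p _; apply: eq_bigr => q _.
rewrite exchange_big /=; apply: eq_bigr => s _; apply: eq_bigr => t _.
by rewrite [r t s]rsym.
Qed.
Lemma S4_pair Psi : S4 Psi = \sum_(a : 'I_n * 'I_n) \sum_(b : 'I_n * 'I_n)
   scale3 (r a.1 a.2 * r b.1 b.2) (Psi (ebase F a.1) (ebase F a.2) (ebase F b.1) (ebase F b.2)).
Proof. rewrite /S4 pair_big /=; apply: eq_bigr => a _; by rewrite pair_big. Qed.
Lemma S4_swap_sw Psi : S4 Psi = S4 (fun p q s t => Psi s t p q).
Proof.
rewrite !S4_pair exchange_big /=; apply: eq_bigr => a _; apply: eq_bigr => b _.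
by rewrite mulrC.
Qed.

Lemma S4_sym_pq Phi Psi :
  S4 (fun p q s t => Phi p q s t + Phi q p s t) = S4 (fun p q s t => Psi p q s t + Psi q p s t) ->
  S4 Phi = S4 Psi.
Proof.
move=> h; apply: twice3; rewrite {2}S4_swap_pq [X in _ = _ + X]S4_swap_pq !S4D.
exact: h.
Qed.
Lemma S4_sym_st Phi Psi :
  S4 (fun p q s t => Phi p q s t + Phi p q t s) = S4 (fun p q s t => Psi p q s t + Psi p q t s) ->
  S4 Phi = S4 Psi.
Proof.
move=> h; apply: twice3; rewrite {2}S4_swap_st [X in _ = _ + X]S4_swap_st !S4D.
exact: h.
Qed.
Lemma S4_sym_sw Phi Psi :
  S4 (fun p q s t => Phi p q s t + Phi s t p q) = S4 (fun p q s t => Psi p q s t + Psi s t p q) ->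
  S4 Phi = S4 Psi.
Proof.
move=> h; apply: twice3; rewrite {2}S4_swap_sw [X in _ = _ + X]S4_swap_sw !S4D.
exact: h.
Qed.

Definition tmap3 (f g h : V -> V) (T : T3) : T3 :=
  \sum_(i < n) \sum_(j < n) \sum_(k < n)
     scale3 (T ((i, j), k)) (tens3 (f (ebase F i)) (g (ebase F j)) (h (ebase F k))).
Definition reidx (g : 'I_n * 'I_n * 'I_n -> 'I_n * 'I_n * 'I_n) (T : T3) : T3 :=
  [ffun k => T (g k)].
Lemma lin33_tmap3 f g h : lin33 (tmap3 f g h).
Proof.
move=> c u v; rewrite /tmap3 scale3_sumr -big_split; apply: eq_bigr => i _.
rewrite scale3_sumr -big_split; apply: eq_bigr => j _.
rewrite scale3_sumr -big_split; apply: eq_bigr => k _.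
by rewrite scale3A !ffunE scale3Dl.
Qed.
Lemma lin33_reidx g : lin33 (reidx g).
Proof. by move=> c u v; apply/ffunP => k; rewrite /scale3 !ffunE. Qed.
Lemma lin33_comp (M1 M2 : T3 -> T3) : lin33 M1 -> lin33 M2 -> lin33 (fun T => M1 (M2 T)).
Proof. by move=> h1 h2 c u v; rewrite h2 h1. Qed.
Lemma tmap3_tens3 (f g h : V -> V) a b c : lin f -> lin g -> lin h ->
  tmap3 f g h (tens3 a b c) = tens3 (f a) (g b) (h c).
Proof.
move=> hf hg hh; rewrite (lin_expand a hf) (lin_expand b hg) (lin_expand c hh).
apply/ffunP => k; rewrite /tmap3 /tens3 !ffunE !summxE big_distrlr /= big_distrl /= sum_ffunE.
apply: eq_bigr => i _; rewrite big_distrlr /= sum_ffunE; apply: eq_bigr => j _.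
rewrite sum_ffunE; apply: eq_bigr => l _; rewrite /scale3 !ffunE !mxE; ring.
Qed.

Definition Ppsi (p q s t : V) : T3 :=
  tens3 p s (mul q t) - tens3 p (mul q s) t + tens3 (bsq mul p s) t q.
Definition Lpsi (p q s t : V) : T3 :=
  tens3 p s (br q t) + tens3 p (br q s) t - tens3 (wsq br p s) q t.
Lemma PLYBE_P_S4 : PLYBE_P mul r = S4 Ppsi.
Proof. by []. Qed.
Lemma PLYBE_L_S4 : PLYBE_L br r = S4 Lpsi.
Proof. by []. Qed.
Lemma id_tens_S2e (d : V -> T2) (Th : V -> V -> V -> T2) (A : V -> V) :
  lin d -> (forall w, d w = S2 (Th w)) ->
  id_tens d (S2 (fun u v => tens2 (A u) v)) =
  S4 (fun p q s t => tensl (A p) (Th q s t)).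
Proof. by move=> hd hT; rewrite (@id_tens_S2 d Th (fun u v => A u) (fun u v => v)). Qed.
Lemma tens_id_S2e (d : V -> T2) (Th : V -> V -> V -> T2) (A : V -> V) :
  lin d -> (forall w, d w = S2 (Th w)) ->
  tens_id d (S2 (fun u v => tens2 (A u) v)) =
  S4 (fun p q s t => tensr (Th (A p) s t) q).
Proof. by move=> hd hT; rewrite (@tens_id_S2 d Th (fun u v => A u) (fun u v => v)). Qed.

Lemma S4_zero (Phi Nt : V -> V -> V -> V -> T3) :
  (forall p q s t, Phi p q s t = Nt p q s t) -> S4 Nt = 0 -> S4 Phi = 0.
Proof. by move=> h; rewrite (eq_S4 h). Qed.
Lemma S4_0 : S4 (fun _ _ _ _ => 0) = 0.
Proof.
rewrite /S4 big1 // => p _; rewrite big1 // => q _; rewrite big1 // => s _.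
by rewrite big1 // => t _; rewrite scale3r0.
Qed.
Lemma S4_sym0 (Nt : V -> V -> V -> V -> T3) :
  (forall p q s t, Nt p q s t + Nt q p s t + (Nt p q t s + Nt q p t s)
      + (Nt s t p q + Nt t s p q + (Nt s t q p + Nt t s q p)) = 0) -> S4 Nt = 0.
Proof.
move=> h; rewrite -S4_0; apply: S4_sym_pq; apply: S4_sym_st; apply: S4_sym_sw.
by apply: eq_S4 => p q s t; rewrite h !addr0.
Qed.
Lemma ev_add (f g : T3) k : (f + g) k = f k + g k. Proof. by rewrite ffunE. Qed.
Lemma ev_opp (f : T3) k : (- f) k = - f k. Proof. by rewrite ffunE. Qed.
Lemma ev_zero k : (0 : T3) k = 0. Proof. by rewrite ffunE. Qed.
Lemma ev_scale3 c (f : T3) k : (scale3 c f) k = c * f k. Proof. by rewrite ffunE. Qed.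
Ltac fin3s := apply/ffunP => k; rewrite ?ev_add ?ev_opp ?ev_zero ?ev_scale3; ring.
Ltac fin3z := apply/ffunP => k; rewrite ?ev_add ?ev_opp ?ev_zero !ffunE ?mxE; ring.

Hypothesis HP : PLYBE_P mul r = 0.
Hypothesis HL : PLYBE_L br r = 0.
Lemma withP (L R : T3) (c : F) (M : T3 -> T3) : lin33 M ->
  L = R + scale3 c (M (S4 Ppsi)) -> L = R.
Proof. by move=> hM; rewrite -PLYBE_P_S4 HP (lin330 hM) scale3r0 addr0. Qed.
Lemma withL (L R : T3) (c : F) (M : T3 -> T3) : lin33 M ->
  L = R + scale3 c (M (S4 Lpsi)) -> L = R.
Proof. by move=> hM; rewrite -PLYBE_L_S4 HL (lin330 hM) scale3r0 addr0. Qed.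

Ltac lin33_tac := first [ exact: lin33_comp (lin33_reidx _) (lin33_tmap3 _ _ _) ].
Ltac to_S4 := rewrite ?dcS2 ?dbS2 /Thc /Thb -?S2D -?S2B -?S2N;
  repeat first [ rewrite (lin3D (lin3_id_tens _)) | rewrite (lin3N (lin3_id_tens _))
               | rewrite (lin3D (lin3_tens_id _)) | rewrite (lin3N (lin3_tens_id _))
               | rewrite (id_tens_S2 _ _ linDC dcS2) | rewrite (id_tens_S2 _ _ linDB dbS2)
               | rewrite (tens_id_S2 _ _ linDC dcS2) | rewrite (tens_id_S2 _ _ linDB dbS2)
               | rewrite (id_tens_S2e _ linDC dcS2) | rewrite (id_tens_S2e _ linDB dbS2)
               | rewrite (tens_id_S2e _ linDC dcS2) | rewrite (tens_id_S2e _ linDB dbS2) ];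
  repeat first [ rewrite (lin33D lin33_flip12) | rewrite (lin33N lin33_flip12)
               | rewrite (lin33_S4 _ lin33_flip12)
               | rewrite (lin33_S4 _ (lin33_comp (lin33_reidx _) (lin33_tmap3 _ _ _)))
               | rewrite S4Z | rewrite S4D | rewrite S4N | rewrite S4B ].
Ltac push3 := repeat first [ rewrite (lin33D (lin33_tmap3 _ _ _)) | rewrite (lin33N (lin33_tmap3 _ _ _))
  | (rewrite tmap3_tens3; [| solve_lin | solve_lin | solve_lin]) ].
Ltac fin3 := apply/ffunP => k; rewrite /tensl /tensr /tens3 /tens2 /flip12 /reidx /scale3 !ffunE !mxE /=; ring.

Definition N_c1a (x p q s t : V) : T3 :=
  [ffun k : 'I_n * 'I_n * 'I_n => - ((mul (mul p s) x) 0 k.1.1 * t 0 k.1.2 * q 0 k.2) + ((mul (mul q s) x) 0 k.1.1 * p 0 k.1.2 * t 0 k.2) - ((mul (mul q x) s) 0 k.1.1 * p 0 k.1.2 * t 0 k.2) + ((mul (mul s x) p) 0 k.1.1 * t 0 k.1.2 * q 0 k.2) + ((mul p s) 0 k.1.1 * q 0 k.1.2 * (mul t x) 0 k.2) + ((mul p s) 0 k.1.1 * t 0 k.1.2 * (mul q x) 0 k.2) - ((mul p x) 0 k.1.1 * (mul q s) 0 k.1.2 * t 0 k.2) + ((mul p x) 0 k.1.1 * (mul s q) 0 k.1.2 * t 0 k.2) + ((mul p x) 0 k.1.1 * s 0 k.1.2 * (mul t q) 0 k.2) - ((mul s p) 0 k.1.1 * q 0 k.1.2 * (mul t x) 0 k.2)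 - ((mul s p) 0 k.1.1 * t 0 k.1.2 * (mul q x) 0 k.2) - ((mul s x) 0 k.1.1 * p 0 k.1.2 * (mul q t) 0 k.2) - ((mul t x) 0 k.1.1 * (mul p s) 0 k.1.2 * q 0 k.2) + ((mul t x) 0 k.1.1 * (mul s p) 0 k.1.2 * q 0 k.2) + ((mul x p) 0 k.1.1 * (mul q s) 0 k.1.2 * t 0 k.2) - ((mul x p) 0 k.1.1 * (mul s q) 0 k.1.2 * t 0 k.2) - ((mul x p) 0 k.1.1 * s 0 k.1.2 * (mul t q) 0 k.2) + ((mul x s) 0 k.1.1 * p 0 k.1.2 * (mul q t) 0 k.2) + ((mul x t) 0 k.1.1 * (mul p s) 0 k.1.2 * q 0 k.2) - ((mul x t) 0 k.1.1 * (mul s p) 0 k.1.2 * q 0 k.2) + (p 0 k.1.1 * (mul (mul q s) x) 0 k.1.2 * t 0 k.2) - (p 0 k.1.1 * (mul (mul q x) s) 0 k.1.2 * t 0 k.2) + (p 0 k.1.1 * (mul q t) 0 k.1.2 * (mul s x) 0 k.2) + (p 0 k.1.1 * s 0 k.1.2 * (mul (mul q t) x) 0 k.2) - (p 0 k.1.1 * t 0 k.1.2 * (mul (mul q s) x) 0 k.2) - (s 0 k.1.1 * (mul (mul p t) x) 0 k.1.2 * q 0 k.2) + (s 0 k.1.1 * (mul (mul t x) p) 0 k.1.2 * q 0 k.2) - (s 0 k.1.1 * (mul t p) 0 k.1.2 * (mul q x) 0 k.2)].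
Lemma coal_c1a x : id_tens dc (dc x) = tens_id dc (dc x).
Proof.
apply: (@withP _ _ 1 (fun T => reidx (fun j => ((j.1.2, j.1.1), j.2)) (tmap3 idV (Rop mul x) idV T))); first by lin33_tac.
apply: (@withP _ _ (-1) (fun T => reidx (fun j => ((j.1.1, j.2), j.1.2)) (tmap3 idV (Rop mul x) idV T))); first by lin33_tac.
apply: (@withP _ _ (-1) (fun T => reidx (fun j => ((j.1.2, j.1.1), j.2)) (tmap3 idV (Lop mul x) idV T))); first by lin33_tac.
to_S4.
apply/eqP; rewrite -subr_eq0 S4B; apply/eqP.
apply: (@S4_zero _ (N_c1a x)).
- move=> p q s t.
  unfold Thc, Thb, Ppsi, Lpsi. push3. distr.
  rewrite ?(pv28 p s x) ?(pv24 p s x) ?(pv24 q s x) ?(pv23 p s x) ?(pv24 p t x) ?(pv24 q t x) ?(pv23 p t x) ?(pv22 q s x).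
  rewrite /N_c1a. fin3.
- apply: S4_sym0 => p q s t. rewrite /N_c1a. cbv beta.
  rewrite ?(pv29 p s x) ?(pv29 q s x) ?(pv29 p t x) ?(pv29 q t x).
  fin3z.
Qed.

Definition N_c1b (x p q s t : V) : T3 :=
  [ffun k : 'I_n * 'I_n * 'I_n => ((mul (mul p s) x) 0 k.1.1 * t 0 k.1.2 * q 0 k.2) - ((mul (mul p t) x) 0 k.1.1 * s 0 k.1.2 * q 0 k.2) - ((mul (mul s x) p) 0 k.1.1 * t 0 k.1.2 * q 0 k.2) + ((mul (mul t x) p) 0 k.1.1 * s 0 k.1.2 * q 0 k.2) - ((mul p s) 0 k.1.1 * t 0 k.1.2 * (mul q x) 0 k.2) + ((mul q s) 0 k.1.1 * t 0 k.1.2 * (mul p x) 0 k.2) + ((mul s p) 0 k.1.1 * t 0 k.1.2 * (mul q x) 0 k.2) - ((mul t p) 0 k.1.1 * s 0 k.1.2 * (mul q x) 0 k.2) + (s 0 k.1.1 * (mul (mul p t) x) 0 k.1.2 * q 0 k.2) - (s 0 k.1.1 * (mul (mul t x) p) 0 k.1.2 * q 0 k.2) - (s 0 k.1.1 * (mul q t) 0 k.1.2 * (mul p x) 0 k.2) + (s 0 k.1.1 * (mul t p) 0 k.1.2 * (mul q x) 0 k.2) - (t 0 k.1.1 * (mul (mul p s) x) 0 k.1.2 * q 0 k.2) + (t 0 k.1.1 * (mul (mul s x) p) 0 k.1.2 * q 0 k.2) + (t 0 k.1.1 * (mul p s) 0 k.1.2 * (mul q x) 0 k.2) - (t 0 k.1.1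 * (mul s p) 0 k.1.2 * (mul q x) 0 k.2)].
Lemma coal_c1b x : tens_id dc (dc x) = flip12 (tens_id dc (dc x)).
Proof.
apply: (@withP _ _ 1 (fun T => reidx (fun j => ((j.2, j.1.1), j.1.2)) (tmap3 (Rop mul x) idV idV T))); first by lin33_tac.
to_S4.
apply/eqP; rewrite -subr_eq0 S4B; apply/eqP.
apply: (@S4_zero _ (N_c1b x)).
- move=> p q s t.
  unfold Thc, Thb, Ppsi, Lpsi. push3. distr.
  rewrite ?(pv29 p s x) ?(pv28 p s x) ?(pv24 p s x) ?(pv23 p s x) ?(pv24 p t x) ?(pv23 p t x).
  rewrite /N_c1b. fin3.
- apply: S4_sym0 => p q s t. rewrite /N_c1b. cbv beta.
  fin3z.
Qed.

Definition N_c2 (x p q s t : V) : T3 :=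
  [ffun k : 'I_n * 'I_n * 'I_n => ((br p s) 0 k.1.1 * (br q x) 0 k.1.2 * t 0 k.2) + ((br p s) 0 k.1.1 * (br x q) 0 k.1.2 * t 0 k.2) + ((br p x) 0 k.1.1 * (br q s) 0 k.1.2 * t 0 k.2) + ((br p x) 0 k.1.1 * (br s q) 0 k.1.2 * t 0 k.2) - ((br p x) 0 k.1.1 * s 0 k.1.2 * (br t q) 0 k.2) + ((br q (br s x)) 0 k.1.1 * p 0 k.1.2 * t 0 k.2) + ((br q (br x s)) 0 k.1.1 * p 0 k.1.2 * t 0 k.2) - ((br q s) 0 k.1.1 * (br p x) 0 k.1.2 * t 0 k.2) - ((br q s) 0 k.1.1 * (br x p) 0 k.1.2 * t 0 k.2) - ((br q x) 0 k.1.1 * (br p s) 0 k.1.2 * t 0 k.2) - ((br q x) 0 k.1.1 * (br s p) 0 k.1.2 * t 0 k.2) - ((br s (br p x)) 0 k.1.1 * t 0 k.1.2 * q 0 k.2) - ((br s (br x p)) 0 k.1.1 * t 0 k.1.2 * q 0 k.2) + ((br s p) 0 k.1.1 * (br q x) 0 k.1.2 * t 0 k.2) + ((br s p) 0 k.1.1 * (br x q) 0 k.1.2 * t 0 k.2) - ((br s q) 0 k.1.1 * (br p x) 0 k.1.2 * t 0 k.2) - ((br s q) 0 k.1.1 * (br x p) 0 k.1.2 * t 0 k.2) + ((br s x) 0 k.1.1 * p 0 k.1.2 * (br q t) 0 k.2) + ((br x p) 0 k.1.1 * (br q s) 0 k.1.2 * t 0 k.2) + ((br x p) 0 k.1.1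 * (br s q) 0 k.1.2 * t 0 k.2) - ((br x p) 0 k.1.1 * s 0 k.1.2 * (br t q) 0 k.2) - ((br x q) 0 k.1.1 * (br p s) 0 k.1.2 * t 0 k.2) - ((br x q) 0 k.1.1 * (br s p) 0 k.1.2 * t 0 k.2) + ((br x s) 0 k.1.1 * p 0 k.1.2 * (br q t) 0 k.2) - (p 0 k.1.1 * (br q (br s x)) 0 k.1.2 * t 0 k.2) - (p 0 k.1.1 * (br q (br x s)) 0 k.1.2 * t 0 k.2) + (p 0 k.1.1 * (br q t) 0 k.1.2 * (br s x) 0 k.2) - (p 0 k.1.1 * (br s x) 0 k.1.2 * (br q t) 0 k.2) - (p 0 k.1.1 * (br x s) 0 k.1.2 * (br q t) 0 k.2) + (p 0 k.1.1 * s 0 k.1.2 * (br t (br q x)) 0 k.2) + (p 0 k.1.1 * t 0 k.1.2 * (br q (br s x)) 0 k.2) - (p 0 k.1.1 * t 0 k.1.2 * (br s (br q x)) 0 k.2) + (s 0 k.1.1 * (br p x) 0 k.1.2 * (br t q) 0 k.2) + (s 0 k.1.1 * (br t (br p x)) 0 k.1.2 * q 0 k.2) + (s 0 k.1.1 * (br t (br x p)) 0 k.1.2 * q 0 k.2) - (s 0 k.1.1 * (br t p) 0 k.1.2 * (br q x) 0 k.2) + (s 0 k.1.1 * (br x p) 0 k.1.2 * (br t q) 0 k.2) - (s 0 k.1.1 * p 0 k.1.2 * (br t (br q x)) 0 k.2)].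
Lemma coal_c2 x : id_tens db (db x) = tens_id db (db x) + flip12 (id_tens db (db x)).
Proof.
apply: (@withL _ _ (-1) (fun T => reidx (fun j => ((j.1.2, j.1.1), j.2)) (tmap3 idV (Rop br x) idV T))); first by lin33_tac.
apply: (@withL _ _ (-1) (fun T => reidx (fun j => ((j.1.1, j.2), j.1.2)) (tmap3 idV (Rop br x) idV T))); first by lin33_tac.
apply: (@withL _ _ 1 (fun T => reidx (fun j => ((j.1.1, j.1.2), j.2)) (tmap3 idV (Lop br x) idV T))); first by lin33_tac.
apply: (@withL _ _ 1 (fun T => reidx (fun j => ((j.1.1, j.1.2), j.2)) (tmap3 idV (Rop br x) idV T))); first by lin33_tac.
apply: (@withL _ _ (-1) (fun T => reidx (fun j => ((j.1.2, j.1.1), j.2)) (tmap3 idV (Lop br x) idV T))); first by lin33_tac.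
to_S4.
apply/eqP; rewrite -subr_eq0 S4B; apply/eqP.
apply: (@S4_zero _ (N_c2 x)).
- move=> p q s t.
  unfold Thc, Thb, Ppsi, Lpsi. push3. distr.
  rewrite ?(pv4 p s x) ?(pv5 q s x) ?(pv4 q s x) ?(pv1 p s x).
  rewrite /N_c2. fin3.
- apply: S4_sym0 => p q s t. rewrite /N_c2. cbv beta.
  fin3z.
Qed.

Definition N_c3 (x p q s t : V) : T3 :=
  [ffun k : 'I_n * 'I_n * 'I_n => - ((br (mul p s) x) 0 k.1.1 * t 0 k.1.2 * q 0 k.2) + ((br p (mul s x)) 0 k.1.1 * t 0 k.1.2 * q 0 k.2) + ((br p s) 0 k.1.1 * (mul q x) 0 k.1.2 * t 0 k.2) - ((br p s) 0 k.1.1 * (mul x q) 0 k.1.2 * t 0 k.2) - ((br p x) 0 k.1.1 * (mul q s) 0 k.1.2 * t 0 k.2) + ((br p x) 0 k.1.1 * (mul s q) 0 k.1.2 * t 0 k.2) + ((br p x) 0 k.1.1 * s 0 k.1.2 * (mul t q) 0 k.2) + ((br q (mul s x)) 0 k.1.1 * p 0 k.1.2 * t 0 k.2) - ((br q (mul x s)) 0 k.1.1 * p 0 k.1.2 * t 0 k.2) - ((br q s) 0 k.1.1 * (mul p x) 0 k.1.2 * t 0 k.2) + ((br q s) 0 k.1.1 * (mul x p) 0 k.1.2 * t 0 k.2) + ((br s (mul x p)) 0 k.1.1 * t 0 k.1.2 * q 0 k.2) + ((br s p) 0 k.1.1 * (mul q x) 0 k.1.2 * t 0 k.2) - ((br s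 p) 0 k.1.1 * (mul x q) 0 k.1.2 * t 0 k.2) - ((br s q) 0 k.1.1 * (mul p x) 0 k.1.2 * t 0 k.2) + ((br s q) 0 k.1.1 * (mul x p) 0 k.1.2 * t 0 k.2) - ((br s x) 0 k.1.1 * p 0 k.1.2 * (mul q t) 0 k.2) - ((br t x) 0 k.1.1 * (mul p s) 0 k.1.2 * q 0 k.2) + ((br t x) 0 k.1.1 * (mul s p) 0 k.1.2 * q 0 k.2) - ((br x p) 0 k.1.1 * (mul q s) 0 k.1.2 * t 0 k.2) + ((br x p) 0 k.1.1 * (mul s q) 0 k.1.2 * t 0 k.2) + ((br x p) 0 k.1.1 * s 0 k.1.2 * (mul t q) 0 k.2) - ((br x s) 0 k.1.1 * p 0 k.1.2 * (mul q t) 0 k.2) - ((br x t) 0 k.1.1 * (mul p s) 0 k.1.2 * q 0 k.2) + ((br x t) 0 k.1.1 * (mul s p) 0 k.1.2 * q 0 k.2) - (p 0 k.1.1 * (br q (mul s x)) 0 k.1.2 * t 0 k.2) + (p 0 k.1.1 * (br q (mul x s)) 0 k.1.2 * t 0 k.2) - (p 0 k.1.1 * (br q t) 0 k.1.2 * (mul s x) 0 k.2) - (p 0 k.1.1 * (mul s x) 0 k.1.2 * (br q t) 0 k.2) + (p 0 k.1.1 * (mul x s) 0 k.1.2 * (br q t) 0 k.2) - (p 0 k.1.1 * s 0 k.1.2 * (br (mul q t) x) 0 k.2) + (p 0 k.1.1 * s 0 k.1.2 * (mul q (br t x)) 0 k.2) + (p 0 k.1.1 * t 0 k.1.2 * (br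 (mul q s) x) 0 k.2) - (p 0 k.1.1 * t 0 k.1.2 * (br q (mul s x)) 0 k.2) - (p 0 k.1.1 * t 0 k.1.2 * (mul q (br s x)) 0 k.2) + (s 0 k.1.1 * (br (mul p t) x) 0 k.1.2 * q 0 k.2) - (s 0 k.1.1 * (br p (mul t x)) 0 k.1.2 * q 0 k.2) - (s 0 k.1.1 * (br t (mul x p)) 0 k.1.2 * q 0 k.2) + (s 0 k.1.1 * (br t p) 0 k.1.2 * (mul q x) 0 k.2) + (s 0 k.1.1 * (mul p x) 0 k.1.2 * (br t q) 0 k.2) - (s 0 k.1.1 * (mul x p) 0 k.1.2 * (br t q) 0 k.2) + (s 0 k.1.1 * p 0 k.1.2 * (br (mul q t) x) 0 k.2) - (s 0 k.1.1 * p 0 k.1.2 * (br q (mul t x)) 0 k.2)].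
Lemma coal_c3 x : id_tens dc (db x) = tens_id db (dc x) + flip12 (id_tens db (dc x)).
Proof.
apply: (@withP _ _ 1 (fun T => reidx (fun j => ((j.1.2, j.1.1), j.2)) (tmap3 idV (Rop br x) idV T))); first by lin33_tac.
apply: (@withL _ _ 1 (fun T => reidx (fun j => ((j.1.1, j.2), j.1.2)) (tmap3 idV (Rop mul x) idV T))); first by lin33_tac.
apply: (@withL _ _ 1 (fun T => reidx (fun j => ((j.1.1, j.1.2), j.2)) (tmap3 idV (Rop mul x) idV T))); first by lin33_tac.
apply: (@withL _ _ (-1) (fun T => reidx (fun j => ((j.1.1, j.1.2), j.2)) (tmap3 idV (Lop mul x) idV T))); first by lin33_tac.
apply: (@withP _ _ 1 (fun T => reidx (fun j => ((j.1.2, j.1.1), j.2)) (tmap3 idV (Lop br x) idV T))); first by lin33_tac.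
to_S4.
apply/eqP; rewrite -subr_eq0 S4B; apply/eqP.
apply: (@S4_zero _ (N_c3 x)).
- move=> p q s t.
  unfold Thc, Thb, Ppsi, Lpsi. push3. distr.
  rewrite ?(pv19 p s x) ?(pv17 p s x) ?(pv17 q s x) ?(pv17 p t x) ?(pv17 q t x) ?(pv16 q s x) ?(pv11 q s x) ?(pv10 q s x) ?(pv14 q s x) ?(pv14 q t x) ?(pv13 q s x).
  rewrite /N_c3. fin3.
- apply: S4_sym0 => p q s t. rewrite /N_c3. cbv beta.
  rewrite ?(pv20 p s x) ?(pv20 q s x) ?(pv20 p t x) ?(pv20 q t x) ?(pv17 p s x) ?(pv17 q s x) ?(pv17 p t x) ?(pv17 q t x).
  fin3z.
Qed.

Definition N_c4 (x p q s t : V) : T3 :=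
  [ffun k : 'I_n * 'I_n * 'I_n => ((br (mul p s) x) 0 k.1.1 * t 0 k.1.2 * q 0 k.2) + ((br p s) 0 k.1.1 * (mul q x) 0 k.1.2 * t 0 k.2) - ((br p s) 0 k.1.1 * (mul x q) 0 k.1.2 * t 0 k.2) - ((br q s) 0 k.1.1 * (mul p x) 0 k.1.2 * t 0 k.2) + ((br q s) 0 k.1.1 * (mul x p) 0 k.1.2 * t 0 k.2) + ((br s p) 0 k.1.1 * (mul q x) 0 k.1.2 * t 0 k.2) - ((br s p) 0 k.1.1 * (mul x q) 0 k.1.2 * t 0 k.2) - ((br s q) 0 k.1.1 * (mul p x) 0 k.1.2 * t 0 k.2) + ((br s q) 0 k.1.1 * (mul x p) 0 k.1.2 * t 0 k.2) - ((mul p (br s x)) 0 k.1.1 * t 0 k.1.2 * q 0 k.2) + ((mul p s) 0 k.1.1 * q 0 k.1.2 * (br t x) 0 k.2) + ((mul p s) 0 k.1.1 * t 0 k.1.2 * (br q x) 0 k.2) - ((mul p x) 0 k.1.1 * (br q s) 0 k.1.2 * t 0 k.2) - ((mul p x) 0 k.1.1 * (br s q) 0 k.1.2 * t 0 k.2) + ((mul p x) 0 k.1.1 * s 0 k.1.2 * (br t q) 0 k.2) - ((mul q (br s x)) 0 k.1.1 * p 0 k.1.2 * t 0 k.2) - ((mul q (br x s)) 0 k.1.1 * p 0 k.1.2 * t 0 k.2) + ((mul q x) 0 k.1.1 * (br p s) 0 k.1.2 * t 0 k.2) + ((mul q x) 0 k.1.1 * (br s p) 0 k.1.2 * t 0 k.2)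 + ((mul s (br x p)) 0 k.1.1 * t 0 k.1.2 * q 0 k.2) - ((mul s p) 0 k.1.1 * q 0 k.1.2 * (br t x) 0 k.2) - ((mul s p) 0 k.1.1 * t 0 k.1.2 * (br q x) 0 k.2) - ((mul s x) 0 k.1.1 * p 0 k.1.2 * (br q t) 0 k.2) + ((mul x p) 0 k.1.1 * (br q s) 0 k.1.2 * t 0 k.2) + ((mul x p) 0 k.1.1 * (br s q) 0 k.1.2 * t 0 k.2) - ((mul x p) 0 k.1.1 * s 0 k.1.2 * (br t q) 0 k.2) - ((mul x q) 0 k.1.1 * (br p s) 0 k.1.2 * t 0 k.2) - ((mul x q) 0 k.1.1 * (br s p) 0 k.1.2 * t 0 k.2) + ((mul x s) 0 k.1.1 * p 0 k.1.2 * (br q t) 0 k.2) - (p 0 k.1.1 * (mul q (br s x)) 0 k.1.2 * t 0 k.2) - (p 0 k.1.1 * (mul q (br x s)) 0 k.1.2 * t 0 k.2) + (p 0 k.1.1 * (mul q t) 0 k.1.2 * (br s x) 0 k.2) - (p 0 k.1.1 * (mul s x) 0 k.1.2 * (br q t) 0 k.2) + (p 0 k.1.1 * (mul x s) 0 k.1.2 * (br q t) 0 k.2) + (p 0 k.1.1 * s 0 k.1.2 * (br (mul q t) x) 0 k.2) - (p 0 k.1.1 * s 0 k.1.2 * (br q (mul t x)) 0 k.2) - (p 0 k.1.1 * t 0 k.1.2 * (br (mul q s) x) 0 k.2) + (s 0 k.1.1 * (br (mul p t) x) 0 k.1.2 * q 0 k.2) - (s 0 k.1.1 * (mul p (br t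 x)) 0 k.1.2 * q 0 k.2) + (s 0 k.1.1 * (mul p x) 0 k.1.2 * (br t q) 0 k.2) + (s 0 k.1.1 * (mul t (br x p)) 0 k.1.2 * q 0 k.2) - (s 0 k.1.1 * (mul t p) 0 k.1.2 * (br q x) 0 k.2) - (s 0 k.1.1 * (mul x p) 0 k.1.2 * (br t q) 0 k.2) + (s 0 k.1.1 * p 0 k.1.2 * (br (mul q t) x) 0 k.2) - (s 0 k.1.1 * p 0 k.1.2 * (br q (mul t x)) 0 k.2)].
Lemma coal_c4 x : tens_id dc (db x) = id_tens db (dc x) + flip12 (id_tens db (dc x)).
Proof.
apply: (@withL _ _ 1 (fun T => reidx (fun j => ((j.1.2, j.1.1), j.2)) (tmap3 idV (Rop mul x) idV T))); first by lin33_tac.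
apply: (@withP _ _ (-1) (fun T => reidx (fun j => ((j.1.1, j.2), j.1.2)) (tmap3 idV (Rop br x) idV T))); first by lin33_tac.
apply: (@withL _ _ 1 (fun T => reidx (fun j => ((j.1.1, j.1.2), j.2)) (tmap3 idV (Rop mul x) idV T))); first by lin33_tac.
apply: (@withL _ _ (-1) (fun T => reidx (fun j => ((j.1.1, j.1.2), j.2)) (tmap3 idV (Lop mul x) idV T))); first by lin33_tac.
apply: (@withL _ _ (-1) (fun T => reidx (fun j => ((j.1.2, j.1.1), j.2)) (tmap3 idV (Lop mul x) idV T))); first by lin33_tac.
to_S4.
apply/eqP; rewrite -subr_eq0 S4B; apply/eqP.
apply: (@S4_zero _ (N_c4 x)).
- move=> p q s t.
  unfold Thc, Thb, Ppsi, Lpsi. push3. distr.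
  rewrite ?(pv17 q s x) ?(pv17 q t x) ?(pv10 p s x) ?(pv11 q s x) ?(pv7 p s x) ?(pv14 p s x) ?(pv14 p t x) ?(pv13 q s x).
  rewrite /N_c4. fin3.
- apply: S4_sym0 => p q s t. rewrite /N_c4. cbv beta.
  rewrite ?(pv20 p s x) ?(pv20 q s x) ?(pv20 p t x) ?(pv20 q t x) ?(pv17 p s x) ?(pv17 q s x) ?(pv17 p t x) ?(pv17 q t x) ?(pv14 p s x) ?(pv14 q s x) ?(pv14 p t x) ?(pv14 q t x).
  fin3z.
Qed.

Definition N_c5 (x p q s t : V) : T3 :=
  [ffun k : 'I_n * 'I_n * 'I_n => ((br (mul p s) x) 0 k.1.1 * t 0 k.1.2 * q 0 k.2) - ((br (mul p t) x) 0 k.1.1 * s 0 k.1.2 * q 0 k.2) - ((br p (mul s x)) 0 k.1.1 * t 0 k.1.2 * q 0 k.2) + ((br p (mul t x)) 0 k.1.1 * s 0 k.1.2 * q 0 k.2) + ((br p s) 0 k.1.1 * t 0 k.1.2 * (mul q x) 0 k.2) - ((br q s) 0 k.1.1 * t 0 k.1.2 * (mul p x) 0 k.2) - ((br s (mul x p)) 0 k.1.1 * t 0 k.1.2 * q 0 k.2) + ((br s p) 0 k.1.1 * t 0 k.1.2 * (mul q x) 0 k.2) + ((br t (mul x p)) 0 k.1.1 * s 0 k.1.2 * q 0 k.2) - ((br t p) 0 k.1.1 * s 0 k.1.2 * (mul q x) 0 k.2) - (s 0 k.1.1 * (br (mul p t) x) 0 k.1.2 * q 0 k.2) + (s 0 k.1.1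 * (br p (mul t x)) 0 k.1.2 * q 0 k.2) - (s 0 k.1.1 * (br q t) 0 k.1.2 * (mul p x) 0 k.2) + (s 0 k.1.1 * (br t (mul x p)) 0 k.1.2 * q 0 k.2) - (s 0 k.1.1 * (br t p) 0 k.1.2 * (mul q x) 0 k.2) + (t 0 k.1.1 * (br (mul p s) x) 0 k.1.2 * q 0 k.2) - (t 0 k.1.1 * (br p (mul s x)) 0 k.1.2 * q 0 k.2) + (t 0 k.1.1 * (br p s) 0 k.1.2 * (mul q x) 0 k.2) - (t 0 k.1.1 * (br s (mul x p)) 0 k.1.2 * q 0 k.2) + (t 0 k.1.1 * (br s p) 0 k.1.2 * (mul q x) 0 k.2)].
Lemma coal_c5 x : tens_id db (dc x) = - flip12 (tens_id db (dc x)).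
Proof.
apply: (@withL _ _ 1 (fun T => reidx (fun j => ((j.2, j.1.1), j.1.2)) (tmap3 (Rop mul x) idV idV T))); first by lin33_tac.
to_S4.
apply/eqP; rewrite -subr_eq0 S4B; apply/eqP.
apply: (@S4_zero _ (N_c5 x)).
- move=> p q s t.
  unfold Thc, Thb, Ppsi, Lpsi. push3. distr.
  rewrite ?(pv19 p s x) ?(pv17 p s x) ?(pv17 p t x) ?(pv11 p s x) ?(pv9 p s x).
  rewrite /N_c5. fin3.
- apply: S4_sym0 => p q s t. rewrite /N_c5. cbv beta.
  fin3z.
Qed.
Lemma comp1 x y : dc (mul x y) = tmap (Lop (bsq mul) x) idV (dc y) + tmap idV (Rop mul y) (dc x).
Proof.
to_S2. apply: S2_sym => p q /=. push2. distr.
rewrite ?(pv28 p x y) ?(pv28 q x y) ?(pv26 p x y) ?(pv26 q x y) ?(pv24 p x y) ?(pv24 q x y) ?(pv23 p x y) ?(pv23 q x y). fin2.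
Qed.

Lemma comp2 x y : tmap idV (Rop mul x) (flip (dc y)) = tmap (Rop mul y) idV (dc x).
Proof.
to_S2. apply: S2_sym => p q /=. push2. distr.
rewrite ?(pv29 p x y) ?(pv29 q x y) ?(pv28 p x y) ?(pv28 q x y). fin2.
Qed.

Lemma comp3 x y : dc (mul x y) = tmap (Lop (bsq mul) y) idV (dbs x) + tmap idV (Lop mul x) (dc y).
Proof.
to_S2. apply: S2_sym => p q /=. push2. distr.
rewrite ?(pv29 p x y) ?(pv29 q x y) ?(pv26 p x y) ?(pv26 q x y) ?(pv24 p x y) ?(pv24 q x y) ?(pv21 p x y) ?(pv21 q x y). fin2.
Qed.

Lemma comp4 x y : tmap idV (Rop br x) (flip (db y)) = tmap (Rop br y) idV (db x).
Proof.
to_S2. apply: S2_sym => p q /=. push2. distr.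
rewrite ?(pv5 p x y) ?(pv4 p x y) ?(pv5 q x y) ?(pv4 q x y) ?(pv3 p x y) ?(pv3 q x y) ?(pv1 p x y) ?(pv1 q x y). fin2.
Qed.

Lemma comp5 x y : db (br x y) = tmap idV (Rop br y) (dws x) - tmap (Lop (wsq br) y) idV (dws x) + (tmap idV (Lop br x) (db y) + tmap (Lop br x) idV (db y)).
Proof.
to_S2. apply: S2_sym => p q /=. push2. distr.
rewrite ?(pv3 p x y) ?(pv3 q x y) ?(pv2 p x y) ?(pv2 q x y). fin2.
Qed.

Lemma comp6 x y : dc (br x y) = tmap idV (Lop br x) (dc y) + tmap (Lop br x) idV (dc y) + (tmap (Lop (bsq mul) y) idV (dws x) - tmap idV (Rop mul y) (dws x)).
Proof.
to_S2. apply: S2_sym => p q /=. push2. distr.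
rewrite ?(pv17 p x y) ?(pv17 q x y) ?(pv9 p x y) ?(pv9 q x y) ?(pv8 p x y) ?(pv8 q x y) ?(pv12 p x y) ?(pv12 q x y). fin2.
Qed.

Lemma comp7 x y : db (mul x y) = tmap idV (Lop mul x) (db y) + tmap idV (Rop mul y) (db x) - tmap (Lop (wsq br) x) idV (dc y) - tmap (Lop (wsq br) y) idV (dbs x).
Proof.
to_S2. apply: S2_sym => p q /=. push2. distr.
rewrite ?(pv20 p x y) ?(pv20 q x y) ?(pv19 p x y) ?(pv19 q x y) ?(pv17 p x y) ?(pv17 q x y) ?(pv15 p x y) ?(pv15 q x y) ?(pv11 p x y) ?(pv11 q x y) ?(pv14 p x y) ?(pv14 q x y). fin2.
Qed.

Lemma comp8 x y : tmap idV (Rop br x) (flip (dc y)) = - tmap (Rop mul y) idV (db x).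
Proof.
to_S2. apply: S2_sym => p q /=. push2. distr.
rewrite ?(pv19 p x y) ?(pv19 q x y) ?(pv11 p x y) ?(pv11 q x y) ?(pv9 p x y) ?(pv9 q x y). fin2.
Qed.

Lemma comp9 x y : dc (br x y) = tmap idV (Lop mul x) (db y) - tmap (Lop mul x) idV (db y) + (tmap idV (Rop br y) (dbs x) - tmap (Lop (wsq br) y) idV (dbs x)).
Proof.
to_S2. apply: S2_sym => p q /=. push2. distr.
rewrite ?(pv20 p x y) ?(pv20 q x y) ?(pv15 p x y) ?(pv15 q x y) ?(pv8 p x y) ?(pv8 q x y) ?(pv14 p x y) ?(pv14 q x y). fin2.
Qed.

Lemma comp10 x y : dws (mul x y) = tmap idV (Lop mul x) (dws y) + tmap idV (Lop mul y) (dws x) - tmap (Lop br x) idV (dbs y) - tmap (Lop br y) idV (dbs x).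
Proof.
to_S2. apply: S2_sym => p q /=. push2. distr.
rewrite ?(pv15 p x y) ?(pv15 q x y) ?(pv12 p x y) ?(pv12 q x y). fin2.
Qed.

Lemma comp11 x y : db (mul x y) = tmap (Lop mul x) idV (db y) - tmap idV (Rop br y) (dbs x) + tmap idV (Lop br x) (dc y) - tmap (Rop (bsq mul) y) idV (dws x).
Proof.
to_S2. apply: S2_sym => p q /=. push2. distr.
rewrite ?(pv20 p x y) ?(pv20 q x y) ?(pv17 p x y) ?(pv17 q x y) ?(pv9 p x y) ?(pv9 q x y) ?(pv14 p x y) ?(pv14 q x y) ?(pv12 p x y) ?(pv12 q x y). fin2.
Qed.

Lemma comp12 x y : dc (wsq br x y) = tmap idV (Lop (wsq br) x) (dc y) + tmap (Lop (wsq br) x) idV (flip (dc y)) - tmap idV (Rop (bsq mul) y) (db x) - tmap (Rop (bsq mul) y) idV (flip (db x)).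
Proof.
to_S2. apply: S2_sym => p q /=. push2. distr.
rewrite ?(pv17 p x y) ?(pv17 q x y) ?(pv11 p x y) ?(pv11 q x y) ?(pv8 p x y) ?(pv8 q x y) ?(pv6 p x y) ?(pv6 q x y) ?(pv13 p x y) ?(pv13 q x y). fin2.
Qed.

Lemma main_sec : dpp_bialgebra mul br dc db.
Proof.
rewrite /dpp_bialgebra /=.
split.
  split; first by split.
  split; first by split.
  split.
  - by move=> x y z; split; [exact: A1 | exact: A2].
  - exact: A3.
  - exact: A4.
  - exact: A5.
  - exact: A6.
split; first exact: linDC.
split; first exact: linDB.
split.
  split.
  - by move=> x; split; [exact: coal_c1a | exact: coal_c1b].
  - exact: coal_c2.
  - exact: coal_c3.
  - exact: coal_c4.
  - exact: coal_c5.
split; first exact: comp1.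
split; first exact: comp2.
split; first exact: comp3.
split; first exact: comp4.
split; first exact: comp5.
split; first exact: comp6.
split; first exact: comp7.
split; first exact: comp8.
split; first exact: comp9.
split; first exact: comp10.
split; first exact: comp11.
exact: comp12.
Qed.
End Main.
End PilotAux.

Theorem theorem3p15 (F : fieldType) (n : nat)
    (mul br : 'rV[F]_n -> 'rV[F]_n -> 'rV[F]_n) (r : 'M[F]_n) :
  [pchar F] =i pred0 ->
  dual_pre_poisson mul br ->
  flip r = r ->
  PLYBE_solution mul br r ->
  dpp_bialgebra mul br (delta_circ_r mul r) (delta_br_r br r).
Proof.
move=> hchar [[HmL HmR] [[HbL HbR] [hA hA3 hA4 hA5 hA6]]] Hr [HP HL].
have H2 : (2%:R : F) != 0 by move/pcharf0P: hchar => ->.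
have A1 : forall x y z, mul x (mul y z) = mul (mul x y) z by move=> x y z; case: (hA x y z).
have A2 : forall x y z, mul (mul x y) z = mul (mul y x) z by move=> x y z; case: (hA x y z).
exact: (PilotAux.main_sec HmL HmR HbL HbR Hr H2 A1 A2 hA3 hA4 hA5 hA6 HP HL).
Qed.
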